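(* Let $s\in\{+1,-1\}$, $\alpha\ge\beta\ge-\tfrac12$, $m\ge1$, and let $x_1$ be the largest zero of $p^{(\alpha+1,\beta)}_m$. Let $f\in\mathcal B_s(I;\alpha,\beta)\setminus\{0\}$ be a polynomial of degree at most $2m$, and if $s=+1$ assume also $f(1)=0$. Then $r(f;I)\ge1-x_1$, with equality if and only if $f$ is a positive multiple of $P(x)=(1-x)\,\frac{p^{(\alpha+1,\beta)}_m(x)^2}{x_1-x}$.
   Context: $I=[-1,1]$; $w_{\alpha,\beta}(x)=c_{\alpha,\beta}(1-x)^\alpha(1+x)^\beta$ on $I$ normalized to a probability density; $P^{(\alpha,\beta)}_n$ Jacobi polynomials (orthogonal for $w_{\alpha,\beta}$, $P^{(\alpha,\beta)}_n(1)=\binom{n+\alpha}{n}$), $p^{(\alpha,\beta)}_n$ their $L^2(w_{\alpha,\beta})$-normalizations; $\widehat f(n)=\int_I f\,p^{(\alpha,\beta)}_nw_{\alpha,\beta}dx$. $\mathcal B_s(I;\alpha,\beta)$: continuous real $f$ on $I$ with $\widehat f(0)\le0$, $\{s\widehat f(n)\}$ eventually nonnegative, $sf(1)\le0$. $r(f;I)=\inf\{r\in(0,2]: f(x)\ge0\text{ for }x\in[-1,1-r)\}$. *)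

(* Defs.v *)
From Stdlib Require Import Reals Lra Arith ClassicalEpsilon ClassicalDescription.
Open Scope R_scope.

Definition inI (x : R) : Prop := -1 <= x <= 1.

(* Improper integral over (-1,1): limit of Riemann integrals over [a,b]
   as a -> -1+ and b -> 1- (needed since the weights may be unbounded
   at the endpoints when alpha or beta is negative). *)
Definition has_Iint (g : R -> R) (l : R) : Prop :=
  forall eps, 0 < eps -> exists delta, 0 < delta /\
    forall a b, -1 < a < -1 + delta -> 1 - delta < b < 1 ->
      exists pr : Riemann_integrable g a b, Rabs (RiemannInt pr - l) < eps.

Definition Iint (g : R -> R) : R :=
  match excluded_middle_informative (exists l, has_Iint g l) with
  | left H => proj1_sig (constructive_indefinite_description _ H)
  | right _ => 0
  end.

Definition wJ (a b : R) (x : R) : R := Rpower (1 - x) a * Rpower (1 + x) b.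

Definition wprob (a b : R) (x : R) : R := wJ a b x / Iint (wJ a b).

Definition inner (a b : R) (f g : R -> R) : R :=
  Iint (fun x => f x * g x * wprob a b x).

Fixpoint fallfac (z : R) (j : nat) : R :=
  match j with
  | O => 1
  | S j' => fallfac z j' * (z - INR j')
  end.
Definition gbinom (z : R) (j : nat) : R := fallfac z j / INR (Factorial.fact j).

(* Jacobi polynomial P_n^{(a,b)} (classical normalization,
   P_n^{(a,b)}(1) = binom(n+a, n)). *)
Definition jacobiP (a b : R) (n : nat) (x : R) : R :=
  sum_f_R0 (fun k => gbinom (INR n + a) (n - k) * gbinom (INR n + b) k
                      * ((x - 1) / 2) ^ k * ((x + 1) / 2) ^ (n - k)) n.

Definition jacobi_p (a b : R) (n : nat) (x : R) : R :=
  jacobiP a b n x / sqrt (inner a b (jacobiP a b n) (jacobiP a b n)).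

Definition jcoef (a b : R) (f : R -> R) (n : nat) : R :=
  inner a b f (jacobi_p a b n).

Definition cont_on_I (f : R -> R) : Prop :=
  forall x, inI x -> limit1_in f inI (f x) x.

Definition in_B (s a b : R) (f : R -> R) : Prop :=
  cont_on_I f /\
  jcoef a b f 0 <= 0 /\
  (exists N : nat, forall n : nat, (N <= n)%nat -> 0 <= s * jcoef a b f n) /\
  s * f 1 <= 0.

Definition is_poly_deg_le (f : R -> R) (d : nat) : Prop :=
  exists c : nat -> R, forall x, f x = sum_f_R0 (fun k => c k * x ^ k) d.

Definition is_glb (E : R -> Prop) (m : R) : Prop :=
  (forall x, E x -> m <= x) /\ (forall b', (forall x, E x -> b' <= x) -> b' <= m).

Definition r_set (f : R -> R) (r : R) : Prop :=
  0 < r <= 2 /\ forall x, -1 <= x < 1 - r -> 0 <= f x.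

Definition r_I (f : R -> R) : R :=
  match excluded_middle_informative (exists m, is_glb (r_set f) m) with
  | left H => proj1_sig (constructive_indefinite_description _ H)
  | right _ => 0
  end.

(* Main.v *)
Require Import Defs.
From Stdlib Require Import Reals Lra Lia List Classical FunctionalExtensionality ClassicalEpsilon.
From Stdlib Require FinFun.
From Coquelicot Require Import Coquelicot.
Open Scope R_scope.


Notation PD d f := (is_poly_deg_le f d).

Lemma isd_const (c x : R) : is_derive (fun _ : R => c) x 0.
Proof. exact (is_derive_const c x). Qed.
Lemma isd_id (x : R) : is_derive (fun y : R => y) x 1.
Proof. exact (is_derive_id x). Qed.
Lemma isd_plus (f g : R -> R) (x df dg : R) : is_derive f x df -> is_derive g x dg -> is_derive (fun y => f y + g y) x (df + dg).
Proof. intros; exact (is_derive_plus f g x df dg H H0). Qed.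
Lemma isd_mult (f g : R -> R) (x df dg : R) : is_derive f x df -> is_derive g x dg -> is_derive (fun y => f y * g y) x (df * g x + f x * dg).
Proof. intros. apply is_derive_Reals. apply derivable_pt_lim_mult; apply is_derive_Reals; auto. Qed.
Lemma isd_ext (f g : R -> R) (x d : R) : (forall y, f y = g y) -> is_derive f x d -> is_derive g x d.
Proof. intros. eapply is_derive_ext; eauto. Qed.
Lemma isd_eq (f : R -> R) (x d d' : R) : d = d' -> is_derive f x d -> is_derive f x d'.
Proof. intros; subst; auto. Qed.
Lemma isd_scal (f : R -> R) (k x d : R) : is_derive f x d -> is_derive (fun y => k * f y) x (k * d).
Proof. intro H. eapply isd_eq. 2: apply (isd_mult (fun _ => k) f). 3: exact H. 2: apply isd_const. ring. Qed.
Lemma isd_divr (f : R -> R) (k x d : R) : is_derive f x d -> is_derive (fun y => f y / k) x (d / k).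
Proof. intro H. eapply isd_eq. 2: apply (isd_mult f (fun _ => / k)). 2: exact H. 2: apply isd_const. unfold Rdiv; ring. Qed.
Lemma isd_opp (f : R -> R) (x d : R) : is_derive f x d -> is_derive (fun y => - f y) x (- d).
Proof. intro H. apply (isd_ext (fun y => -1 * f y) (fun y => - f y) x (- d)). intro; ring. replace (- d) with (-1 * d) by ring. apply isd_scal; exact H. Qed.


Lemma PD_0 g : PD 0 g <-> exists c, forall x, g x = c.
Proof.
  split.
  - intros [c Hc]. exists (c 0%nat). intro x. rewrite Hc. simpl. ring.
  - intros [c Hc]. exists (fun _ => c). intro x. rewrite Hc. simpl. ring.
Qed.

Lemma PD_S d g : PD (S d) g <-> exists c0 g1, PD d g1 /\ forall x, g x = c0 + x * g1 x.
Proof.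
  split.
  - intros [c Hc]. exists (c 0%nat), (fun x => sum_f_R0 (fun k => c (S k) * x ^ k) d).
    split. { exists (fun k => c (S k)). intro; reflexivity. }
    intro x. rewrite Hc. rewrite (decomp_sum _ (S d)) by lia. simpl pred.
    rewrite scal_sum. simpl. f_equal. ring. apply sum_eq. intros i _. simpl. ring.
  - intros [c0 [g1 [[c Hc] Hg]]].
    exists (fun k => match k with O => c0 | S k' => c k' end).
    intro x. rewrite Hg, Hc. rewrite (decomp_sum _ (S d)) by lia. simpl pred.
    rewrite scal_sum. simpl. f_equal. ring. apply sum_eq. intros i _. simpl. ring.
Qed.

Lemma PD_ext d f g : (forall x, f x = g x) -> PD d f -> PD d g.
Proof. intros H [c Hc]. exists c. intro x. rewrite <- H. apply Hc. Qed.

Lemma PD_const d c : PD d (fun _ => c).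
Proof.
  induction d.
  - apply PD_0. exists c. auto.
  - apply PD_S. exists c, (fun _ => 0). split.
    + clear IHd. induction d. apply PD_0. exists 0; auto.
      apply PD_S. exists 0, (fun _ => 0). split; auto. intro; ring.
    + intro; ring.
Qed.

Lemma PD_mono d d' f : (d <= d')%nat -> PD d f -> PD d' f.
Proof.
  revert d' f. induction d; intros d' f Hle H.
  - apply PD_0 in H. destruct H as [c Hc]. eapply PD_ext. 2: apply (PD_const d' c). intro; auto.
  - destruct d'. lia. apply PD_S in H. destruct H as [c0 [g1 [H1 H2]]].
    apply PD_S. exists c0, g1. split; auto. apply IHd; auto. lia.
Qed.

Lemma PD_add d f g : PD d f -> PD d g -> PD d (fun x => f x + g x).
Proof.
  revert f g. induction d; intros f g Hf Hg.
  - apply PD_0 in Hf, Hg. destruct Hf as [a Ha], Hg as [b Hb]. apply PD_0. exists (a+b). intro; rewrite Ha, Hb; auto.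
  - apply PD_S in Hf, Hg. destruct Hf as [a [f1 [Hf1 Ha]]], Hg as [b [g1 [Hg1 Hb]]].
    apply PD_S. exists (a+b), (fun x => f1 x + g1 x). split. apply IHd; auto.
    intro; rewrite Ha, Hb; ring.
Qed.

Lemma PD_scal d k f : PD d f -> PD d (fun x => k * f x).
Proof.
  intros [c Hc]. exists (fun i => k * c i). intro x. rewrite Hc. rewrite scal_sum.
  apply sum_eq. intros; ring.
Qed.

Lemma PD_opp d f : PD d f -> PD d (fun x => - f x).
Proof. intro H. eapply PD_ext. 2: apply (PD_scal _ (-1) _ H). intro; cbv beta. ring. Qed.

Lemma PD_sub d f g : PD d f -> PD d g -> PD d (fun x => f x - g x).
Proof. intros Hf Hg. eapply PD_ext. 2: apply (PD_add _ _ _ Hf (PD_opp _ _ Hg)). intro; cbv beta; ring. Qed.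

Lemma PD_mulx d f : PD d f -> PD (S d) (fun x => x * f x).
Proof. intro H. apply PD_S. exists 0, f. split; auto. intro; ring. Qed.

Lemma PD_mul d1 d2 f g : PD d1 f -> PD d2 g -> PD (d1 + d2) (fun x => f x * g x).
Proof.
  revert g. induction d2; intros g Hf Hg.
  - apply PD_0 in Hg. destruct Hg as [c Hc]. rewrite Nat.add_0_r.
    eapply PD_ext. 2: apply (PD_scal _ c _ Hf). intro; rewrite Hc; ring.
  - apply PD_S in Hg. destruct Hg as [c0 [g1 [Hg1 Hc]]].
    eapply PD_ext. 2: apply (PD_add _ (fun x => c0 * f x) (fun x => x * (f x * g1 x))).
    intro x; simpl; rewrite Hc; ring.
    apply PD_mono with d1. lia. apply PD_scal; auto.
    rewrite Nat.add_succ_r. apply PD_mulx. apply IHd2; auto.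
Qed.

Lemma PD_sum d n (F : nat -> R -> R) : (forall k, (k <= n)%nat -> PD d (F k)) ->
  PD d (fun x => sum_f_R0 (fun k => F k x) n).
Proof.
  induction n; intro H.
  - simpl. apply H; auto.
  - simpl. apply PD_add. apply IHn. intros; apply H; lia. apply H; lia.
Qed.

Lemma PD_lin u v : PD 1 (fun x => u * x + v).
Proof. apply PD_S. exists v, (fun _ => u). split. apply PD_const. intro; ring. Qed.

Lemma PD_pow d k f : PD d f -> PD (k * d) (fun x => f x ^ k).
Proof.
  intro H. induction k.
  - simpl. apply PD_const.
  - simpl. replace (d + k * d)%nat with (d + k*d)%nat by lia. apply PD_mul; auto.
Qed.

Lemma PD_factor d f r : PD d f -> f r = 0 ->
  exists h, PD (d - 1) h /\ forall x, f x = (x - r) * h x.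
Proof.
  revert f. induction d; intros f Hf Hr.
  - apply PD_0 in Hf. destruct Hf as [c Hc]. exists (fun _ => 0). split. apply PD_const.
    intro x. rewrite Hc. rewrite Hc in Hr. rewrite Hr. ring.
  - apply PD_S in Hf. destruct Hf as [c0 [g1 [Hg1 Hc]]].
    destruct (IHd (fun x => g1 x - g1 r)) as [k [Hk Hk2]].
    { apply PD_sub; auto. apply PD_const. } { ring. }
    exists (fun x => g1 x + r * k x). split.
    + simpl. rewrite Nat.sub_0_r. apply PD_add; auto. apply PD_scal. apply PD_mono with (d-1)%nat; auto; lia.
    + intro x. rewrite Hc. rewrite Hc in Hr.
      assert (E: g1 x = g1 r + (x - r) * k x) by (rewrite <- Hk2; ring).
      rewrite E. replace c0 with (- r * g1 r) by lra. ring.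
Qed.

Fixpoint prodl (l : list R) (x : R) : R :=
  match l with nil => 1 | r :: l' => (x - r) * prodl l' x end.

Lemma PD_prodl l : PD (length l) (prodl l).
Proof.
  induction l; simpl.
  - apply PD_const.
  - eapply PD_ext. 2: apply (PD_mul 1 (length l) (fun x => 1 * x + - a) (prodl l)); auto.
    intro; cbv beta; ring. apply PD_lin.
Qed.

Lemma prodl_zero l x : In x l -> prodl l x = 0.
Proof. induction l; simpl; intros H. contradiction. destruct H. subst. ring. rewrite IHl; auto; ring. Qed.

Lemma prodl_nz l x : ~ In x l -> prodl l x <> 0.
Proof.
  induction l; simpl; intros H. lra.
  apply Rmult_integral_contrapositive. split. intro; apply H; left; lra.
  apply IHl. intro; apply H; right; auto.
Qed.

Lemma roots_zero rs : forall d f, PD d f -> NoDup rs -> (forall r, In r rs -> f r = 0) ->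
  (d < length rs)%nat -> forall x, f x = 0.
Proof.
  induction rs as [|r0 rs IH]; intros d f Hf Hnd Hr Hl x; simpl in Hl. lia.
  destruct d.
  - apply PD_0 in Hf. destruct Hf as [c Hc]. rewrite Hc. rewrite <- (Hc r0). apply Hr; left; auto.
  - destruct (PD_factor _ _ r0 Hf) as [h [Hh Hfh]]. apply Hr; left; auto.
    inversion Hnd; subst.
    rewrite Hfh. rewrite (IH d h). ring. simpl in Hh; rewrite Nat.sub_0_r in Hh; auto. auto.
    intros r Hin. assert (f r = 0) by (apply Hr; right; auto). rewrite Hfh in H.
    apply Rmult_integral in H. destruct H; auto. assert (r = r0) by lra. subst. contradiction.
    lia.
Qed.

Lemma factor_list rs : forall d f, PD d f -> NoDup rs -> (forall r, In r rs -> f r = 0) ->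
  exists h, PD (d - length rs) h /\ forall x, f x = prodl rs x * h x.
Proof.
  induction rs as [|r0 rs IH]; intros d f Hf Hnd Hr; simpl.
  - exists f. rewrite Nat.sub_0_r. split; auto. intro; ring.
  - destruct (PD_factor _ _ r0 Hf) as [h0 [Hh0 Hfh]]. apply Hr; left; auto.
    inversion Hnd; subst.
    destruct (IH (d-1)%nat h0) as [h [Hh Hh2]]; auto.
    intros r Hin. assert (f r = 0) by (apply Hr; right; auto). rewrite Hfh in H.
    apply Rmult_integral in H. destruct H; auto. assert (r = r0) by lra. subst. contradiction.
    exists h. split. replace (d - S (length rs))%nat with (d - 1 - length rs)%nat by lia. auto.
    intro x. rewrite Hfh, Hh2. ring.
Qed.

Lemma PD_continuous d f : PD d f -> forall x, continuous f x.
Proof.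
  revert f. induction d; intros f Hf x.
  - apply PD_0 in Hf. destruct Hf as [c Hc]. eapply continuous_ext. intro; symmetry; apply Hc. apply continuous_const.
  - apply PD_S in Hf. destruct Hf as [c0 [g1 [Hg1 Hc]]].
    eapply continuous_ext. intro; symmetry; apply Hc.
    apply (continuous_plus (fun _ => c0) (fun y => y * g1 y)). apply continuous_const.
    apply (continuous_mult (fun y => y) g1). apply continuous_id. apply IHd; auto.
Qed.

Lemma PD_bounded d f : PD d f -> exists M, forall x, -1 <= x <= 1 -> Rabs (f x) <= M.
Proof.
  revert f. induction d; intros f Hf.
  - apply PD_0 in Hf. destruct Hf as [c Hc]. exists (Rabs c). intros. rewrite Hc; lra.
  - apply PD_S in Hf. destruct Hf as [c0 [g1 [Hg1 Hc]]].
    destruct (IHd g1 Hg1) as [M HM]. exists (Rabs c0 + Rabs M). intros x Hx.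
    rewrite Hc. eapply Rle_trans. apply Rabs_triang. apply Rplus_le_compat_l.
    rewrite Rabs_mult. specialize (HM x Hx).
    assert (Rabs x <= 1) by (apply Rabs_le; lra).
    assert (0 <= Rabs (g1 x)) by apply Rabs_pos.
    assert (M <= Rabs M) by apply RRle_abs.
    apply Rle_trans with (1 * Rabs (g1 x)). apply Rmult_le_compat_r; auto. lra.
Qed.

Lemma PD_deriv d f : PD d f -> exists f', PD (d - 1) f' /\ forall x, is_derive f x (f' x).
Proof.
  revert f. induction d; intros f Hf.
  - apply PD_0 in Hf. destruct Hf as [c Hc]. exists (fun _ => 0). split. apply PD_const.
    intro x. eapply is_derive_ext. intro; symmetry; apply Hc. apply isd_const.
  - apply PD_S in Hf. destruct Hf as [c0 [g1 [Hg1 Hc]]].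
    destruct (IHd g1 Hg1) as [g1' [Hg1' Hd]].
    exists (fun x => g1 x + x * g1' x). split.
    + simpl. rewrite Nat.sub_0_r. destruct d.
      * apply PD_0 in Hg1. destruct Hg1 as [k Hk].
        assert (forall x, g1' x = 0).
        { intro x. specialize (Hd x). apply is_derive_unique in Hd. rewrite <- Hd.
          rewrite (Derive_ext _ (fun _ => k)). apply Derive_const. auto. }
        apply PD_0. exists k. intro; rewrite H, Hk; ring.
      * apply PD_add; auto. apply PD_mulx. simpl in Hg1'. rewrite Nat.sub_0_r in Hg1'. auto.
    + intro x. eapply is_derive_ext. intro; symmetry; apply Hc.
      eapply isd_eq. 2: apply isd_plus. 2: apply isd_const. 2: apply isd_mult. 2: apply isd_id. 2: apply Hd.
      cbv beta; ring.
Qed.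

Lemma deriv_seq n : forall g, PD n g -> exists D : nat -> R -> R,
  (forall x, D 0%nat x = g x) /\ (forall i x, is_derive (D i) x (D (S i) x)) /\ (forall x, D (S n) x = 0)
  /\ (forall i, PD n (D i)).
Proof.
  induction n; intros g Hg.
  - pose proof Hg as Hg0. apply PD_0 in Hg. destruct Hg as [c Hc].
    exists (fun i => match i with O => g | S _ => fun _ => 0 end). split; auto. split; [|split; auto].
    intros [|i] x. eapply is_derive_ext. intro; symmetry; apply Hc. apply isd_const.
    apply isd_const. intros [|i]; auto. apply PD_const.
  - destruct (PD_deriv _ _ Hg) as [g' [Hg' Hd]]. simpl in Hg'. rewrite Nat.sub_0_r in Hg'.
    destruct (IHn g' Hg') as [D [H0 [H1 [H2 H3]]]].
    exists (fun i => match i with O => g | S i' => D i' end). split; auto. split; [|split; auto].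
    intros [|i] x. rewrite H0. auto. apply H1.
    intros [|i]; auto. apply PD_mono with n; auto.
Qed.


Lemma rp_pos t e : 0 < Rpower t e.
Proof. unfold Rpower. apply exp_pos. Qed.

Lemma isd_rp_m e x : x < 1 -> is_derive (fun y => Rpower (1 - y) e) x (- (e * Rpower (1 - x) (e - 1))).
Proof.
  intro Hx. apply is_derive_Reals.
  replace (- (e * Rpower (1 - x) (e - 1))) with ((e * Rpower (1 - x) (e - 1)) * (-1)) by ring.
  apply (derivable_pt_lim_comp (fun y => 1 - y) (fun t => Rpower t e)).
  - apply is_derive_Reals. eapply isd_eq. 2: apply (is_derive_minus (fun _ => 1) (fun y => y)).
    2: apply isd_const. 2: apply isd_id. unfold minus, plus, opp; simpl. ring.
  - apply derivable_pt_lim_power. lra.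
Qed.

Lemma isd_rp_p e x : -1 < x -> is_derive (fun y => Rpower (1 + y) e) x (e * Rpower (1 + x) (e - 1)).
Proof.
  intro Hx. apply is_derive_Reals.
  replace (e * Rpower (1 + x) (e - 1)) with ((e * Rpower (1 + x) (e - 1)) * 1) by ring.
  apply (derivable_pt_lim_comp (fun y => 1 + y) (fun t => Rpower t e)).
  - apply is_derive_Reals. eapply isd_eq. 2: apply isd_plus. 2: apply isd_const. 2: apply isd_id. ring.
  - apply derivable_pt_lim_power. lra.
Qed.

Lemma cont_rp_m e x : x < 1 -> continuous (fun y => Rpower (1 - y) e) x.
Proof. intro. apply (ex_derive_continuous (fun y => Rpower (1 - y) e)). eexists. apply isd_rp_m; auto. Qed.
Lemma cont_rp_p e x : -1 < x -> continuous (fun y => Rpower (1 + y) e) x.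
Proof. intro. apply (ex_derive_continuous (fun y => Rpower (1 + y) e)). eexists. apply isd_rp_p; auto. Qed.

Lemma rp_small e : 0 < e -> forall eps, 0 < eps -> exists del, 0 < del /\
  forall t, 0 < t < del -> Rpower t e < eps.
Proof.
  intros He eps Heps. exists (Rpower eps (/ e)). split. apply rp_pos.
  intros t Ht. replace eps with (Rpower (Rpower eps (/ e)) e).
  apply Rlt_Rpower_l; auto; lra.
  rewrite Rpower_mult. replace (/ e * e) with 1 by (field; lra). apply Rpower_1; auto.
Qed.

Lemma rp_le_base t1 t2 e : 0 <= e -> 0 < t1 <= t2 -> Rpower t1 e <= Rpower t2 e.
Proof. intros. apply Rle_Rpower_l; auto. Qed.

Lemma rp_plus_nat t e n : 0 < t -> Rpower t (e + INR n) = Rpower t e * t ^ n.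
Proof. intro. rewrite Rpower_plus, Rpower_pow; auto. Qed.

Definition HI (g : R -> R) (l : R) : Prop :=
  (forall u v, -1 < u -> u <= v -> v < 1 -> ex_RInt g u v) /\
  forall eps, 0 < eps -> exists del, 0 < del /\
    forall u v, -1 < u < -1 + del -> 1 - del < v < 1 -> Rabs (RInt g u v - l) < eps.

Lemma HI_has g l : HI g l -> has_Iint g l.
Proof.
  intros [Hex Hlim] eps Heps. destruct (Hlim eps Heps) as [del [Hdel H]].
  exists (Rmin del 1). split. apply Rmin_pos; lra.
  intros u v Hu Hv. pose proof (Rmin_l del 1). pose proof (Rmin_r del 1).
  assert (Hi : ex_RInt g u v) by (apply Hex; lra).
  exists (ex_RInt_Reals_0 _ _ _ Hi). rewrite <- RInt_Reals. apply H; lra.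
Qed.

Lemma has_Iint_unique g l1 l2 : has_Iint g l1 -> has_Iint g l2 -> l1 = l2.
Proof.
  intros H1 H2. apply Rle_antisym; apply Rnot_lt_le; intro Hlt.
  - set (eps := (l1 - l2) / 2).
    destruct (H1 eps) as [d1 [Hd1 K1]]. unfold eps; lra.
    destruct (H2 eps) as [d2 [Hd2 K2]]. unfold eps; lra.
    set (d := Rmin d1 d2). assert (0 < d) by (apply Rmin_pos; auto).
    assert (d <= d1) by apply Rmin_l. assert (d <= d2) by apply Rmin_r.
    destruct (K1 (-1 + d/2) (1 - d/2)) as [p1 E1]. lra. lra.
    destruct (K2 (-1 + d/2) (1 - d/2)) as [p2 E2]. lra. lra.
    rewrite (RiemannInt_P5 p1 p2) in E1.
    apply Rabs_def2 in E1. apply Rabs_def2 in E2. unfold eps in *. lra.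
  - set (eps := (l2 - l1) / 2).
    destruct (H1 eps) as [d1 [Hd1 K1]]. unfold eps; lra.
    destruct (H2 eps) as [d2 [Hd2 K2]]. unfold eps; lra.
    set (d := Rmin d1 d2). assert (0 < d) by (apply Rmin_pos; auto).
    assert (d <= d1) by apply Rmin_l. assert (d <= d2) by apply Rmin_r.
    destruct (K1 (-1 + d/2) (1 - d/2)) as [p1 E1]. lra. lra.
    destruct (K2 (-1 + d/2) (1 - d/2)) as [p2 E2]. lra. lra.
    rewrite (RiemannInt_P5 p1 p2) in E1.
    apply Rabs_def2 in E1. apply Rabs_def2 in E2. unfold eps in *. lra.
Qed.

Lemma Iint_HI g l : HI g l -> Iint g = l.
Proof.
  intro H. apply HI_has in H. unfold Iint.
  match goal with |- context [match ?t with left _ => _ | right _ => _ end] => destruct t as [E|E] end.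
  - destruct (constructive_indefinite_description _ E) as [l' Hl']. simpl.
    eapply has_Iint_unique; eauto.
  - exfalso. apply E. eauto.
Qed.

Lemma HI_plus g1 g2 l1 l2 : HI g1 l1 -> HI g2 l2 -> HI (fun x => g1 x + g2 x) (l1 + l2).
Proof.
  intros [E1 L1] [E2 L2]. split.
  - intros. apply (ex_RInt_plus g1 g2); auto.
  - intros eps Heps. destruct (L1 (eps/2)) as [d1 [Hd1 K1]]. lra.
    destruct (L2 (eps/2)) as [d2 [Hd2 K2]]. lra.
    exists (Rmin (Rmin d1 d2) 1). split. repeat apply Rmin_pos; lra.
    intros u v Hu Hv.
    pose proof (Rmin_l (Rmin d1 d2) 1). pose proof (Rmin_r (Rmin d1 d2) 1).
    pose proof (Rmin_l d1 d2). pose proof (Rmin_r d1 d2).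
    assert (Hx1 : ex_RInt g1 u v) by (apply E1; lra).
    assert (Hx2 : ex_RInt g2 u v) by (apply E2; lra).
    pose proof (RInt_plus g1 g2 u v Hx1 Hx2) as HP. change plus with Rplus in HP. simpl in HP.
    rewrite HP.
    specialize (K1 u v ltac:(lra) ltac:(lra)). specialize (K2 u v ltac:(lra) ltac:(lra)).
    apply Rabs_def2 in K1. apply Rabs_def2 in K2. apply Rabs_def1; lra.
Qed.

Lemma HI_scal k g l : HI g l -> HI (fun x => k * g x) (k * l).
Proof.
  intros [E1 L1]. split.
  - intros. apply (ex_RInt_scal g); auto.
  - intros eps Heps. destruct (L1 (eps / (Rabs k + 1))) as [d1 [Hd1 K1]].
    apply Rdiv_lt_0_compat; auto. pose proof (Rabs_pos k); lra.
    exists (Rmin d1 1). split. apply Rmin_pos; lra.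
    intros u v Hu Hv. pose proof (Rmin_l d1 1). pose proof (Rmin_r d1 1).
    assert (Hx1 : ex_RInt g u v) by (apply E1; lra).
    pose proof (RInt_scal g u v k Hx1) as HP. change scal with Rmult in HP. simpl in HP.
    unfold mult in HP; simpl in HP. rewrite HP.
    specialize (K1 u v ltac:(lra) ltac:(lra)).
    replace (k * RInt g u v - k * l) with (k * (RInt g u v - l)) by ring.
    rewrite Rabs_mult. pose proof (Rabs_pos k).
    apply Rle_lt_trans with ((Rabs k + 1) * Rabs (RInt g u v - l)).
    apply Rmult_le_compat_r. apply Rabs_pos. lra.
    apply Rmult_lt_reg_l with (/ (Rabs k + 1)). apply Rinv_0_lt_compat; lra.
    rewrite <- Rmult_assoc, Rinv_l by lra. lra.
Qed.

Lemma HI_ext g1 g2 l : (forall x, -1 < x < 1 -> g1 x = g2 x) -> HI g1 l -> HI g2 l.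
Proof.
  intros He [E1 L1]. split.
  - intros u v Hu Huv Hv. apply (ex_RInt_ext g1). intros x Hx.
    rewrite Rmin_left in Hx by lra. rewrite Rmax_right in Hx by lra. apply He; lra.
    apply E1; auto.
  - intros eps Heps. destruct (L1 eps Heps) as [d1 [Hd1 K1]].
    exists (Rmin d1 1). split. apply Rmin_pos; lra.
    intros u v Hu Hv. pose proof (Rmin_l d1 1). pose proof (Rmin_r d1 1).
    rewrite <- (RInt_ext g1). apply K1; lra.
    intros x Hx. rewrite Rmin_left in Hx by lra. rewrite Rmax_right in Hx by lra. apply He; lra.
Qed.

Lemma HI_sub g1 g2 l1 l2 : HI g1 l1 -> HI g2 l2 -> HI (fun x => g1 x - g2 x) (l1 - l2).
Proof.
  intros H1 H2. replace (l1 - l2) with (l1 + -1 * l2) by ring.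
  eapply HI_ext. 2: apply (HI_plus _ _ _ _ H1 (HI_scal (-1) _ _ H2)).
  intros; simpl; ring. 
Qed.


Definition contI (h : R -> R) := forall x, -1 < x < 1 -> continuous h x.

Lemma exRI h u v : contI h -> -1 < u -> u <= v -> v < 1 -> ex_RInt h u v.
Proof.
  intros Hc Hu Huv Hv. apply (@ex_RInt_continuous R_CompleteNormedModule h). intros z Hz.
  rewrite Rmin_left in Hz by lra. rewrite Rmax_right in Hz by lra. apply Hc; lra.
Qed.

Lemma RInt_mono_int h u u0 v0 v : contI h -> (forall x, -1 < x < 1 -> 0 <= h x) ->
  -1 < u -> u <= u0 -> u0 <= v0 -> v0 <= v -> v < 1 -> RInt h u0 v0 <= RInt h u v.
Proof.
  intros Hc Hp Hu H1 H2 H3 Hv.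
  assert (E1 : ex_RInt h u u0) by (apply exRI; auto; lra).
  assert (E2 : ex_RInt h u0 v0) by (apply exRI; auto; lra).
  assert (E3 : ex_RInt h v0 v) by (apply exRI; auto; lra).
  rewrite <- (RInt_Chasles h u v0 v). rewrite <- (RInt_Chasles h u u0 v0); auto.
  change plus with Rplus. simpl.
  assert (0 <= RInt h u u0) by (apply RInt_ge_0; auto; intros; apply Hp; lra).
  assert (0 <= RInt h v0 v) by (apply RInt_ge_0; auto; intros; apply Hp; lra).
  lra. apply exRI; auto; lra. auto.
Qed.

Lemma HI_ge h l u0 v0 : HI h l -> contI h -> (forall x, -1 < x < 1 -> 0 <= h x) ->
  -1 < u0 -> u0 <= v0 -> v0 < 1 -> RInt h u0 v0 <= l.
Proof.
  intros [Ex L] Hc Hp Hu0 Huv Hv0. apply Rnot_lt_le. intro Hlt.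
  destruct (L (RInt h u0 v0 - l)) as [del [Hdel K]]. lra.
  set (d := Rmin del (Rmin (u0 + 1) (1 - v0))).
  assert (0 < d) by (repeat apply Rmin_pos; lra).
  assert (d <= del) by apply Rmin_l.
  assert (d <= Rmin (u0 + 1) (1 - v0)) by apply Rmin_r.
  pose proof (Rmin_l (u0 + 1) (1 - v0)). pose proof (Rmin_r (u0 + 1) (1 - v0)).
  specialize (K (-1 + d/2) (1 - d/2) ltac:(lra) ltac:(lra)).
  pose proof (RInt_mono_int h (-1 + d/2) u0 v0 (1 - d/2) Hc Hp ltac:(lra) ltac:(lra) Huv ltac:(lra) ltac:(lra)).
  apply Rabs_def2 in K. lra.
Qed.

Lemma HI_nonneg h l : HI h l -> contI h -> (forall x, -1 < x < 1 -> 0 <= h x) -> 0 <= l.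
Proof.
  intros H Hc Hp. pose proof (HI_ge h l 0 0 H Hc Hp ltac:(lra) ltac:(lra) ltac:(lra)).
  rewrite RInt_point in H0. exact H0.
Qed.

Lemma cont_eps h x : continuous h x -> forall eps, 0 < eps -> exists del, 0 < del /\
  forall y, Rabs (y - x) < del -> Rabs (h y - h x) < eps.
Proof.
  intros Hc eps Heps. apply continuity_pt_filterlim in Hc.
  destruct (Hc eps Heps) as [del [Hdel K]]. exists del. split; auto.
  intros y Hy. destruct (Req_dec y x). subst. rewrite Rminus_eq_0, Rabs_R0; auto.
  apply K. split. unfold D_x, no_cond. split; auto. simpl. unfold R_dist. auto.
Qed.

Lemma HI_pos h l : HI h l -> contI h -> (forall x, -1 < x < 1 -> 0 <= h x) ->
  (exists x0, -1 < x0 < 1 /\ 0 < h x0) -> 0 < l.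
Proof.
  intros H Hc Hp [x0 [Hx0 Hpos]].
  destruct (cont_eps h x0 (Hc x0 Hx0) (h x0 / 2)) as [del [Hdel K]]. lra.
  set (d := Rmin (del/2) (Rmin ((x0 + 1)/2) ((1 - x0)/2))).
  assert (0 < d) by (repeat apply Rmin_pos; lra).
  assert (d <= del/2) by apply Rmin_l.
  assert (d <= Rmin ((x0 + 1)/2) ((1 - x0)/2)) by apply Rmin_r.
  pose proof (Rmin_l ((x0 + 1)/2) ((1 - x0)/2)). pose proof (Rmin_r ((x0 + 1)/2) ((1 - x0)/2)).
  apply Rlt_le_trans with (RInt h (x0 - d) (x0 + d)).
  - apply RInt_gt_0. lra.
    intros y Hy. specialize (K y). assert (Rabs (y - x0) < del) by (apply Rabs_def1; lra).
    specialize (K H5). apply Rabs_def2 in K. lra.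
    intros y Hy. apply Hc. lra.
  - apply HI_ge; auto; lra.
Qed.

Lemma HI_mono_exists h B : contI h -> (forall x, -1 < x < 1 -> 0 <= h x) ->
  (forall u v, -1 < u -> u <= v -> v < 1 -> RInt h u v <= B) -> exists l, HI h l.
Proof.
  intros Hc Hp HB.
  set (E := fun y => exists u v, -1 < u <= 0 /\ 0 <= v < 1 /\ y = RInt h u v).
  assert (Hb : bound E). { exists B. intros y [u [v [Hu [Hv ->]]]]. apply HB; lra. }
  assert (He : exists y, E y). { exists (RInt h 0 0). exists 0, 0. split; [lra|split; [lra|auto]]. }
  destruct (completeness E Hb He) as [l [Hub Hlub]].
  exists l. split. { intros; apply exRI; auto. }
  intros eps Heps.
  assert (exists y, E y /\ l - eps < y).
  { apply NNPP. intro N. assert (l <= l - eps). apply Hlub. intros y Ey. apply Rnot_lt_le. intro. apply N. eauto. lra. }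
  destruct H as [y [[u0 [v0 [Hu0 [Hv0 ->]]]] Hy]].
  exists (Rmin (u0 + 1) (1 - v0)). split. apply Rmin_pos; lra.
  intros u v Hu Hv. pose proof (Rmin_l (u0 + 1) (1 - v0)). pose proof (Rmin_r (u0 + 1) (1 - v0)).
  pose proof (RInt_mono_int h u u0 v0 v Hc Hp ltac:(lra) ltac:(lra) ltac:(lra) ltac:(lra) ltac:(lra)).
  assert (RInt h u v <= l). { apply Hub. exists u, v. split; [lra|split; [lra|auto]]. }
  apply Rabs_def1; lra.
Qed.

Lemma contI_wJ a b : contI (wJ a b).
Proof.
  intros x Hx. unfold wJ. apply (continuous_mult (fun y => Rpower (1 - y) a) (fun y => Rpower (1 + y) b)).
  apply cont_rp_m; lra. apply cont_rp_p; lra.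
Qed.

Lemma wJ_pos a b x : 0 < wJ a b x.
Proof. unfold wJ. apply Rmult_lt_0_compat; apply rp_pos. Qed.

Lemma rp_le2 t e : 1 <= t <= 2 -> Rpower t e <= Rpower 2 (Rabs e).
Proof.
  intros Ht. apply Rle_trans with (Rpower t (Rabs e)). apply Rle_Rpower; auto. lra. apply RRle_abs.
  apply Rle_Rpower_l; auto. apply Rabs_pos. lra.
Qed.

Lemma wJ_le a b x : -1 < x < 1 ->
  wJ a b x <= (Rpower 2 (Rabs a) + Rpower 2 (Rabs b)) * (Rpower (1 - x) a + Rpower (1 + x) b).
Proof.
  intro Hx. unfold wJ. pose proof (rp_pos (1-x) a). pose proof (rp_pos (1+x) b).
  pose proof (rp_pos 2 (Rabs a)). pose proof (rp_pos 2 (Rabs b)).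
  destruct (Rle_dec 0 x).
  - assert (Rpower (1 + x) b <= Rpower 2 (Rabs b)) by (apply rp_le2; lra).
    apply Rle_trans with (Rpower (1 - x) a * Rpower 2 (Rabs b)).
    apply Rmult_le_compat_l; lra. nra.
  - assert (Rpower (1 - x) a <= Rpower 2 (Rabs a)) by (apply rp_le2; lra).
    apply Rle_trans with (Rpower 2 (Rabs a) * Rpower (1 + x) b).
    apply Rmult_le_compat_r; lra. nra.
Qed.

Lemma RInt_anti F f u v : u <= v -> (forall x, u <= x <= v -> is_derive F x (f x)) ->
  (forall x, u <= x <= v -> continuous f x) -> RInt f u v = F v - F u.
Proof.
  intros Huv HD Hc. apply is_RInt_unique.
  apply (@is_RInt_derive R_CompleteNormedModule F f u v).
  intros x Hx. rewrite Rmin_left in Hx by lra. rewrite Rmax_right in Hx by lra. apply HD; auto.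
  intros x Hx. rewrite Rmin_left in Hx by lra. rewrite Rmax_right in Hx by lra. apply Hc; auto.
Qed.

Lemma RInt_wJ_bound a b : -1 < a -> -1 < b -> exists B, forall u v, -1 < u -> u <= v -> v < 1 ->
  RInt (wJ a b) u v <= B.
Proof.
  intros Ha Hb. set (K := Rpower 2 (Rabs a) + Rpower 2 (Rabs b)).
  assert (HK : 0 < K) by (unfold K; pose proof (rp_pos 2 (Rabs a)); pose proof (rp_pos 2 (Rabs b)); lra).
  exists (K * (Rpower 2 (a+1) / (a+1) + Rpower 2 (b+1) / (b+1))).
  intros u v Hu Huv Hv.
  set (g := fun x => K * (Rpower (1 - x) a + Rpower (1 + x) b)).
  set (F := fun x => K * (- (Rpower (1 - x) (a+1)) / (a+1) + Rpower (1 + x) (b+1) / (b+1))).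
  assert (Hcg : contI g).
  { intros x Hx. unfold g. apply (continuous_mult (fun _ => K) (fun y => Rpower (1 - y) a + Rpower (1 + y) b)).
    apply continuous_const. apply (continuous_plus (fun y => Rpower (1 - y) a) (fun y => Rpower (1 + y) b)).
    apply cont_rp_m; lra. apply cont_rp_p; lra. }
  apply Rle_trans with (RInt g u v).
  - apply RInt_le; auto. apply exRI; auto. apply contI_wJ. apply exRI; auto.
    intros x Hx. apply wJ_le. lra.
  - rewrite (RInt_anti F g u v Huv).
    + unfold F. 
      assert (Rpower (1 + v) (b + 1) <= Rpower 2 (b+1)) by (apply Rle_Rpower_l; lra).
      assert (Rpower (1 - u) (a + 1) <= Rpower 2 (a+1)) by (apply Rle_Rpower_l; lra).
      pose proof (rp_pos (1 - v) (a+1)). pose proof (rp_pos (1 + u) (b+1)).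
      assert (forall z y, 0 < y -> z / y = z * / y) by (intros; unfold Rdiv; auto).
      assert (0 < / (a+1)) by (apply Rinv_0_lt_compat; lra).
      assert (0 < / (b+1)) by (apply Rinv_0_lt_compat; lra).
      unfold Rdiv. rewrite <- Rmult_minus_distr_l. apply Rmult_le_compat_l. lra.
      assert (Rpower (1 + v) (b + 1) * / (b+1) <= Rpower 2 (b+1) * / (b+1)) by (apply Rmult_le_compat_r; lra).
      assert (Rpower (1 - u) (a + 1) * / (a+1) <= Rpower 2 (a+1) * / (a+1)) by (apply Rmult_le_compat_r; lra).
      assert (0 <= Rpower (1 - v) (a + 1) * / (a+1)) by nra.
      assert (0 <= Rpower (1 + u) (b + 1) * / (b+1)) by nra.
      lra.
    + intros x Hx. unfold F, g. 
      apply (isd_eq _ _ (K * (- (- ((a+1) * Rpower (1 - x) (a+1-1))) / (a+1) + ((b+1) * Rpower (1 + x) (b+1-1)) / (b+1)))).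
      replace (a+1-1) with a by ring. replace (b+1-1) with b by ring. field. split; lra.
      apply (isd_scal (fun y => - Rpower (1 - y) (a + 1) / (a + 1) + Rpower (1 + y) (b + 1) / (b + 1))).
      apply (isd_plus (fun y => - Rpower (1 - y) (a + 1) / (a + 1)) (fun y => Rpower (1 + y) (b + 1) / (b + 1))).
      * apply (isd_divr (fun y => - Rpower (1 - y) (a + 1))).
        apply (isd_opp (fun y => Rpower (1 - y) (a + 1))). apply isd_rp_m. lra.
      * apply (isd_divr (fun y => Rpower (1 + y) (b + 1))). apply isd_rp_p. lra.
    + intros x Hx. apply Hcg. lra.
Qed.

Lemma contI_mult f g : contI f -> contI g -> contI (fun x => f x * g x).
Proof. intros Hf Hg x Hx. apply (continuous_mult f g); auto. Qed.
Lemma contI_plus f g : contI f -> contI g -> contI (fun x => f x + g x).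
Proof. intros Hf Hg x Hx. apply (continuous_plus f g); auto. Qed.
Lemma contI_PD d f : PD d f -> contI f.
Proof. intros H x _. eapply PD_continuous; eauto. Qed.
Lemma contI_const c : contI (fun _ => c).
Proof. intros x _. apply continuous_const. Qed.

Lemma RInt_scal_R k g u v : ex_RInt g u v -> RInt (fun x => k * g x) u v = k * RInt g u v.
Proof. intro H. apply (RInt_scal g u v k H). Qed.

Lemma HI_wJ_exists_pos a b k : -1 < a -> -1 < b -> 0 <= k -> exists l, HI (fun x => k * wJ a b x) l.
Proof.
  intros Ha Hb Hk. destruct (RInt_wJ_bound a b Ha Hb) as [B HB].
  apply (HI_mono_exists _ (k * B)).
  - apply contI_mult. apply contI_const. apply contI_wJ.
  - intros. pose proof (wJ_pos a b x). nra.
  - intros u v Hu Huv Hv. rewrite RInt_scal_R. apply Rmult_le_compat_l; auto.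
    apply exRI; auto. apply contI_wJ.
Qed.

Lemma HI_poly_exists a b d q : -1 < a -> -1 < b -> PD d q -> exists l, HI (fun x => q x * wJ a b x) l.
Proof.
  intros Ha Hb Hq. destruct (PD_bounded d q Hq) as [M HM].
  assert (HM0 : 0 <= M) by (specialize (HM 0 ltac:(lra)); pose proof (Rabs_pos (q 0)); lra).
  destruct (RInt_wJ_bound a b Ha Hb) as [B HB].
  destruct (HI_wJ_exists_pos a b M Ha Hb HM0) as [l2 H2].
  assert (Hc : contI (fun x => (q x + M) * wJ a b x)).
  { apply contI_mult. apply contI_plus. eapply contI_PD; eauto. apply contI_const. apply contI_wJ. }
  destruct (HI_mono_exists (fun x => (q x + M) * wJ a b x) (2 * M * B) Hc) as [l1 H1].
  - intros x Hx. specialize (HM x ltac:(lra)). apply Rabs_le_between in HM. pose proof (wJ_pos a b x). nra.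
  - intros u v Hu Huv Hv. apply Rle_trans with (RInt (fun x => (2 * M) * wJ a b x) u v).
    apply RInt_le; auto. apply exRI; auto. apply exRI; auto. apply contI_mult. apply contI_const. apply contI_wJ.
    intros x Hx. specialize (HM x ltac:(lra)). apply Rabs_le_between in HM. pose proof (wJ_pos a b x). nra.
    rewrite RInt_scal_R. apply Rmult_le_compat_l. lra. apply HB; auto.
    apply exRI; auto. apply contI_wJ.
  - exists (l1 - l2). eapply HI_ext. 2: apply (HI_sub _ _ _ _ H1 H2). intros; simpl; ring.
Qed.


Lemma C_n_0 n : Binomial.C n 0 = 1.
Proof. unfold Binomial.C. rewrite Nat.sub_0_r. simpl. field. apply INR_fact_neq_0. Qed.
Lemma C_n_n n : Binomial.C n n = 1.
Proof. unfold Binomial.C. rewrite Nat.sub_diag. simpl. field. apply INR_fact_neq_0. Qed.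

Lemma leib_id (U V : nat -> R) j :
  sum_f_R0 (fun i => Binomial.C j i * (U (S (j - i)) * V i + U (j - i)%nat * V (S i))) j
  = sum_f_R0 (fun i => Binomial.C (S j) i * U (S j - i)%nat * V i) (S j).
Proof.
  destruct j as [|j].
  - simpl. rewrite C_n_0, C_n_n.
    replace (Binomial.C 1 1) with 1 by (symmetry; apply C_n_n). rewrite !C_n_0. ring.
  - transitivity (sum_f_R0 (fun i => Binomial.C (S j) i * U (S (S j - i)) * V i) (S j)
       + sum_f_R0 (fun i => Binomial.C (S j) i * U (S j - i)%nat * V (S i)) (S j)).
    { rewrite <- plus_sum. apply sum_eq. intros; ring. }
    rewrite (decomp_sum (fun i => Binomial.C (S j) i * U (S (S j - i)) * V i) (S j)) by lia.
    rewrite (tech5 (fun i => Binomial.C (S j) i * U (S j - i)%nat * V (S i)) j).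
    rewrite (decomp_sum _ (S (S j))) by lia. simpl pred.
    rewrite (tech5 (fun i => Binomial.C (S (S j)) (S i) * U (S (S j) - S i)%nat * V (S i)) j).
    simpl pred.
    assert (E : sum_f_R0 (fun i => Binomial.C (S (S j)) (S i) * U (S (S j) - S i)%nat * V (S i)) j
      = sum_f_R0 (fun i => Binomial.C (S j) (S i) * U (S (S j - S i)) * V (S i)) j
        + sum_f_R0 (fun i => Binomial.C (S j) i * U (S j - i)%nat * V (S i)) j).
    { rewrite <- plus_sum. apply sum_eq. intros i Hi.
      rewrite <- pascal by lia.
      replace (S (S j - S i)) with (S j - i)%nat by lia.
      replace (S (S j) - S i)%nat with (S j - i)%nat by lia. ring. }
    rewrite E. rewrite !C_n_0, !C_n_n.
    replace (S j - S j)%nat with 0%nat by lia. replace (S (S j) - S (S j))%nat with 0%nat by lia.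
    replace (S (S j - 0)) with (S (S j) - 0)%nat by lia. ring.
Qed.

Lemma isd_sum (F dF : nat -> R -> R) n x : (forall i, (i <= n)%nat -> is_derive (F i) x (dF i x)) ->
  is_derive (fun y => sum_f_R0 (fun i => F i y) n) x (sum_f_R0 (fun i => dF i x) n).
Proof.
  induction n; intro H; simpl.
  - apply H; auto.
  - apply (isd_plus (fun y => sum_f_R0 (fun i => F i y) n) (F (S n))). apply IHn. intros; apply H; lia. apply H; lia.
Qed.

Definition Phi (u v : nat -> R -> R) j x := sum_f_R0 (fun i => Binomial.C j i * u (j - i)%nat x * v i x) j.

Lemma Phi_deriv u v j x : (forall k, is_derive (u k) x (u (S k) x)) -> (forall k, is_derive (v k) x (v (S k) x)) ->
  is_derive (Phi u v j) x (Phi u v (S j) x).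
Proof.
  intros Hu Hv. unfold Phi. rewrite <- (leib_id (fun k => u k x) (fun k => v k x)).
  apply (isd_sum (fun i y => Binomial.C j i * u (j - i)%nat y * v i y)
    (fun i y => Binomial.C j i * (u (S (j - i)) y * v i y + u (j - i)%nat y * v (S i) y))).
  intros i Hi. apply (isd_ext (fun y => Binomial.C j i * (u (j - i)%nat y * v i y))). intros; ring.
  apply isd_scal. apply (isd_eq _ _ (u (S (j - i)) x * v i x + u (j - i)%nat x * v (S i) x)). ring.
  apply isd_mult; auto.
Qed.

Lemma telescope (T : nat -> R) N : sum_f_R0 (fun i => T i - T (S i)) N = T 0%nat - T (S N).
Proof. induction N; simpl; [ring|rewrite IHN; ring]. Qed.


Definition uu (A : R) (n k : nat) (x : R) :=
  (-1) ^ k * fallfac (INR n + A) k * Rpower (1 - x) (INR n + A - INR k).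
Definition vv (B : R) (n k : nat) (x : R) :=
  fallfac (INR n + B) k * Rpower (1 + x) (INR n + B - INR k).

Lemma uu_deriv A n k x : x < 1 -> is_derive (uu A n k) x (uu A n (S k) x).
Proof.
  intro Hx. unfold uu.
  apply (isd_ext (fun y => ((-1) ^ k * fallfac (INR n + A) k) * Rpower (1 - y) (INR n + A - INR k))).
  intro; ring.
  eapply isd_eq. 2: apply isd_scal; apply isd_rp_m; auto.
  rewrite S_INR. simpl. replace (INR n + A - (INR k + 1)) with (INR n + A - INR k - 1) by ring. ring.
Qed.

Lemma vv_deriv B n k x : -1 < x -> is_derive (vv B n k) x (vv B n (S k) x).
Proof.
  intro Hx. unfold vv.
  eapply isd_eq. 2: apply isd_scal; apply isd_rp_p; auto.
  rewrite S_INR. simpl. replace (INR n + B - (INR k + 1)) with (INR n + B - INR k - 1) by ring. ring.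
Qed.

Definition PhiJ A B n j x := Phi (uu A n) (vv B n) j x.

Lemma PhiJ_deriv A B n j x : -1 < x < 1 -> is_derive (PhiJ A B n j) x (PhiJ A B n (S j) x).
Proof. intro Hx. apply Phi_deriv; intro k. apply uu_deriv; lra. apply vv_deriv; lra. Qed.

Lemma PhiJ_cont A B n j : contI (PhiJ A B n j).
Proof. intros x Hx. apply (ex_derive_continuous (PhiJ A B n j)). eexists. apply PhiJ_deriv; auto. Qed.

Definition Kn (n : nat) := (-1) ^ n / (2 ^ n * INR (Factorial.fact n)).

Lemma jac_rod A B n x : -1 < x < 1 ->
  jacobiP A B n x * wJ A B x = Kn n * PhiJ A B n n x.
Proof.
  intro Hx. unfold jacobiP, PhiJ, Phi. rewrite Rmult_comm, scal_sum, scal_sum.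
  apply sum_eq. intros i Hi. set (r := (n - i)%nat).
  assert (Hn : n = (i + r)%nat) by (unfold r; lia).
  unfold uu, vv, gbinom, Binomial.C, wJ. fold r.
  assert (E1 : INR n + A - INR r = A + INR i) by (rewrite Hn, plus_INR; ring).
  assert (E2 : INR n + B - INR i = B + INR r) by (rewrite Hn, plus_INR; ring).
  rewrite E1, E2, !rp_plus_nat by lra.
  set (f1 := fallfac (INR n + A) r). set (f2 := fallfac (INR n + B) i).
  set (RA := Rpower (1 - x) A). set (RB := Rpower (1 + x) B).
  unfold Kn. rewrite Hn, !pow_add.
  replace ((x - 1) / 2) with ((-1) * (1 - x) * / 2) by (field).
  replace ((x + 1) / 2) with ((1 + x) * / 2) by (field).
  rewrite !Rpow_mult_distr, !pow_inv.
  assert (Hr : (-1) ^ r * (-1) ^ r = 1).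
  { rewrite <- Rpow_mult_distr. replace (-1 * -1) with 1 by ring. apply pow1. }
  replace (i + r - i)%nat with r by lia.
  assert (F1 := INR_fact_neq_0 i). assert (F2 := INR_fact_neq_0 r). assert (F3 := INR_fact_neq_0 (i + r)).
  assert (P1 : 2 ^ i <> 0) by (apply pow_nonzero; lra). assert (P2 : 2 ^ r <> 0) by (apply pow_nonzero; lra).
  match goal with |- ?L = ?R => transitivity (L * ((-1)^r * (-1)^r)) end.
  rewrite Hr; ring. field; auto.
Qed.

Definition QJ A B n j x := sum_f_R0 (fun i => Binomial.C j i *
   ((-1) ^ (j - i) * fallfac (INR n + A) (j - i) * (1 - x) ^ (n - 1 - (j - i)))
   * (fallfac (INR n + B) i * (1 + x) ^ (n - 1 - i))) j.

Lemma PhiJ_fact A B n j x : (1 <= n)%nat -> (j <= n - 1)%nat -> -1 < x < 1 ->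
  PhiJ A B n j x = wJ (A + 1) (B + 1) x * QJ A B n j x.
Proof.
  intros Hn Hj Hx. unfold PhiJ, Phi, QJ. rewrite scal_sum. apply sum_eq. intros i Hi.
  unfold uu, vv, wJ.
  assert (E1 : INR n + A - INR (j - i) = (A + 1) + INR (n - 1 - (j - i))).
  { replace n with ((n - 1 - (j - i)) + (j - i) + 1)%nat at 1 by lia. rewrite !plus_INR. simpl. ring. }
  assert (E2 : INR n + B - INR i = (B + 1) + INR (n - 1 - i)).
  { replace n with ((n - 1 - i) + i + 1)%nat at 1 by lia. rewrite !plus_INR. simpl. ring. }
  rewrite E1, E2, !rp_plus_nat by lra. ring.
Qed.

Lemma PD_om d p q (c : R) : (p + q <= d)%nat -> PD d (fun x => c * ((1 - x) ^ p * (1 + x) ^ q)).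
Proof.
  intro H. apply PD_scal. apply PD_mono with (p * 1 + q * 1)%nat. lia.
  apply PD_mul.
  - eapply PD_ext. 2: apply (PD_pow 1 p (fun x => -1 * x + 1)). intro; cbv beta; f_equal; ring. apply PD_lin.
  - eapply PD_ext. 2: apply (PD_pow 1 q (fun x => 1 * x + 1)). intro; cbv beta; f_equal; ring. apply PD_lin.
Qed.

Lemma QJ_PD A B n j : PD (2 * n) (QJ A B n j).
Proof.
  unfold QJ. apply (PD_sum _ j (fun i x => Binomial.C j i *
   ((-1) ^ (j - i) * fallfac (INR n + A) (j - i) * (1 - x) ^ (n - 1 - (j - i)))
   * (fallfac (INR n + B) i * (1 + x) ^ (n - 1 - i)))).
  intros i Hi. eapply PD_ext. 2: apply (PD_om (2 * n) (n - 1 - (j - i)) (n - 1 - i)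
    (Binomial.C j i * (-1) ^ (j - i) * fallfac (INR n + A) (j - i) * fallfac (INR n + B) i)).
  intro; cbv beta; ring. lia.
Qed.

Lemma HI_from_anti h H : contI h -> (forall x, -1 < x < 1 -> is_derive H x (h x)) ->
  (forall eps, 0 < eps -> exists del, 0 < del /\ forall x, -1 < x < 1 -> (x < -1 + del \/ 1 - del < x) -> Rabs (H x) < eps) ->
  HI h 0.
Proof.
  intros Hc HD Hb. split. { intros; apply exRI; auto. }
  intros eps Heps. destruct (Hb (eps/2)) as [del [Hdel K]]. lra.
  exists (Rmin del 1). split. apply Rmin_pos; lra.
  intros u v Hu Hv. pose proof (Rmin_l del 1). pose proof (Rmin_r del 1).
  rewrite (RInt_anti H h u v). 2: lra.
  2: intros; apply HD; lra. 2: intros; apply Hc; lra.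
  pose proof (K u ltac:(lra) ltac:(lra)). pose proof (K v ltac:(lra) ltac:(lra)).
  apply Rabs_def2 in H2. apply Rabs_def2 in H3. apply Rabs_def1; lra.
Qed.

Lemma bdry_small A B R M : 0 < A -> 0 < B -> (forall x, -1 <= x <= 1 -> Rabs (R x) <= M) ->
  forall eps, 0 < eps -> exists del, 0 < del /\ forall x, -1 < x < 1 -> (x < -1 + del \/ 1 - del < x) ->
    Rabs (wJ A B x * R x) < eps.
Proof.
  intros HA HB HM eps Heps.
  assert (HM0 : 0 <= M) by (specialize (HM 0 ltac:(lra)); pose proof (Rabs_pos (R 0)); lra).
  set (K := (M + 1) * (Rpower 2 A + Rpower 2 B)).
  assert (HK : 0 < K) by (unfold K; pose proof (rp_pos 2 A); pose proof (rp_pos 2 B); nra).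
  destruct (rp_small A HA (eps / K)) as [d1 [Hd1 K1]]. apply Rdiv_lt_0_compat; lra.
  destruct (rp_small B HB (eps / K)) as [d2 [Hd2 K2]]. apply Rdiv_lt_0_compat; lra.
  exists (Rmin d1 d2). split. apply Rmin_pos; lra. intros x Hx Hor.
  pose proof (Rmin_l d1 d2). pose proof (Rmin_r d1 d2).
  unfold wJ. rewrite !Rabs_mult. rewrite (Rabs_right (Rpower (1 - x) A)) by (left; apply rp_pos).
  rewrite (Rabs_right (Rpower (1 + x) B)) by (left; apply rp_pos).
  specialize (HM x ltac:(lra)). pose proof (Rabs_pos (R x)).
  pose proof (rp_pos (1 - x) A). pose proof (rp_pos (1 + x) B).
  assert (eps / K * K = eps) by (field; lra).
  destruct Hor as [Hl|Hr].
  - assert (Rpower (1 + x) B < eps / K) by (apply K2; lra).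
    assert (Rpower (1 - x) A <= Rpower 2 A) by (apply Rle_Rpower_l; lra).
    assert (Rpower (1 - x) A * Rpower (1 + x) B * Rabs (R x) <= Rpower 2 A * Rpower (1 + x) B * (M+1)).
    { apply Rmult_le_compat; try nra. }
    assert (Rpower 2 A * Rpower (1 + x) B * (M + 1) < Rpower 2 A * (eps / K) * (M + 1)).
    { pose proof (rp_pos 2 A). apply Rmult_lt_compat_r. lra. apply Rmult_lt_compat_l; lra. }
    assert (Rpower 2 A * (eps / K) * (M + 1) <= eps).
    { unfold K in *. pose proof (rp_pos 2 A). pose proof (rp_pos 2 B).
      replace (Rpower 2 A * (eps / ((M + 1) * (Rpower 2 A + Rpower 2 B))) * (M + 1)) with
        (eps * (Rpower 2 A / (Rpower 2 A + Rpower 2 B))) by (field; lra).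
      rewrite <- (Rmult_1_r eps) at 2. apply Rmult_le_compat_l. lra.
      apply Rmult_le_reg_r with (Rpower 2 A + Rpower 2 B). lra. field_simplify; lra. }
    lra.
  - assert (Rpower (1 - x) A < eps / K) by (apply K1; lra).
    assert (Rpower (1 + x) B <= Rpower 2 B) by (apply Rle_Rpower_l; lra).
    assert (Rpower (1 - x) A * Rpower (1 + x) B * Rabs (R x) <= Rpower (1 - x) A * Rpower 2 B * (M+1)).
    { apply Rmult_le_compat; try nra. }
    assert (Rpower (1 - x) A * Rpower 2 B * (M + 1) < (eps / K) * Rpower 2 B * (M + 1)).
    { pose proof (rp_pos 2 B). apply Rmult_lt_compat_r. lra. apply Rmult_lt_compat_r; lra. }
    assert ((eps / K) * Rpower 2 B * (M + 1) <= eps).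
    { unfold K in *. pose proof (rp_pos 2 A). pose proof (rp_pos 2 B).
      replace ((eps / ((M + 1) * (Rpower 2 A + Rpower 2 B))) * Rpower 2 B * (M + 1)) with
        (eps * (Rpower 2 B / (Rpower 2 A + Rpower 2 B))) by (field; lra).
      rewrite <- (Rmult_1_r eps) at 2. apply Rmult_le_compat_l. lra.
      apply Rmult_le_reg_r with (Rpower 2 A + Rpower 2 B). lra. field_simplify; lra. }
    lra.
Qed.

Theorem ortho A B n g : -1 < A -> -1 < B -> (1 <= n)%nat -> PD (n - 1) g ->
  HI (fun x => jacobiP A B n x * g x * wJ A B x) 0.
Proof.
  intros HA HB Hn Hg.
  destruct (deriv_seq (n-1) g Hg) as [D [D0 [Dd [Dn DP]]]].
  replace (S (n - 1)) with n in Dn by lia.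
  set (H := fun x => sum_f_R0 (fun i => (-1)^i * D i x * PhiJ A B n (n-1-i) x) (n-1)).
  assert (Hmain : HI (fun x => g x * PhiJ A B n n x) 0).
  { apply HI_from_anti with H.
    - apply contI_mult. eapply contI_PD; eauto. apply PhiJ_cont.
    - intros x Hx. unfold H.
      eapply isd_eq. 2: apply (isd_sum (fun i y => (-1)^i * D i y * PhiJ A B n (n-1-i) y)
         (fun i y => (-1)^i * (D (S i) y * PhiJ A B n (n-1-i) y + D i y * PhiJ A B n (S (n-1-i)) y))).
      + set (T := fun i => (-1)^i * D i x * PhiJ A B n (n - i) x).
        rewrite (sum_eq _ (fun i => T i - T (S i))).
        * rewrite telescope. unfold T. replace (S (n - 1)) with n by lia. rewrite Dn, D0.
          replace (n - 0)%nat with n by lia. simpl. ring.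
        * intros i Hi. unfold T. replace (S (n - 1 - i)) with (n - i)%nat by lia.
          replace (n - S i)%nat with (n - 1 - i)%nat by lia. simpl. ring.
      + intros i Hi. apply (isd_ext (fun y => (-1)^i * (D i y * PhiJ A B n (n - 1 - i) y))). intro; ring.
        apply isd_scal. eapply isd_eq. 2: apply isd_mult. 2: apply Dd. 2: apply PhiJ_deriv; auto. ring.
    - set (RR := fun x => sum_f_R0 (fun i => (-1)^i * D i x * QJ A B n (n-1-i) x) (n-1)).
      assert (HRR : PD (n - 1 + 2 * n) RR).
      { unfold RR. apply (PD_sum _ (n-1) (fun i x => (-1)^i * D i x * QJ A B n (n-1-i) x)).
        intros i Hi. eapply PD_ext. 2: apply (PD_scal _ ((-1)^i)); apply (PD_mul _ _ (D i) (QJ A B n (n-1-i))).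
        intro; cbv beta; ring. apply DP. apply QJ_PD. }
      destruct (PD_bounded _ _ HRR) as [M HM].
      intros eps Heps. destruct (bdry_small (A+1) (B+1) RR M ltac:(lra) ltac:(lra) HM eps Heps) as [del [Hdel K]].
      exists del. split; auto. intros x Hx Hor.
      replace (H x) with (wJ (A + 1) (B + 1) x * RR x). apply K; auto.
      unfold H, RR. rewrite scal_sum. apply sum_eq. intros i Hi. rewrite PhiJ_fact; auto; try lia. ring. }
  apply HI_ext with (fun x => Kn n * (g x * PhiJ A B n n x)).
  - intros x Hx. transitivity (g x * (Kn n * PhiJ A B n n x)). ring. rewrite <- jac_rod; auto. ring.
  - replace 0 with (Kn n * 0) by ring. apply HI_scal; auto.
Qed.


Definition rm (z : R) (l : list R) := remove Req_EM_T z l.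

Lemma NoDup_rm z l : NoDup l -> NoDup (rm z l).
Proof.
  induction l; intro H; simpl. constructor. inversion H; subst. unfold rm; simpl.
  destruct (Req_EM_T z a). apply IHl; auto. constructor. intro Hin. apply in_remove in Hin. tauto.
  apply IHl; auto.
Qed.

Lemma prodl_rm z l : NoDup l -> In z l -> forall x, prodl l x = (x - z) * prodl (rm z l) x.
Proof.
  induction l; intros Hnd Hin x; simpl in *. contradiction. inversion Hnd; subst. unfold rm; simpl.
  destruct (Req_EM_T z a).
  - subst. rewrite notin_remove; auto.
  - destruct Hin. subst; contradiction. simpl. rewrite (IHl H2 H x). unfold rm. ring.
Qed.

Lemma cont_PD_std d f : PD d f -> continuity f.
Proof. intros H x. apply continuity_pt_filterlim. eapply PD_continuous; eauto. Qed.

Lemma const_sign d f : PD d f -> (forall x, -1 < x < 1 -> f x <> 0) ->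
  (forall x, -1 < x < 1 -> 0 <= f x) \/ (forall x, -1 < x < 1 -> f x <= 0).
Proof.
  intros Hf Hnz. destruct (classic (exists x, -1 < x < 1 /\ f x < 0)) as [[x [Hx Hfx]]|N].
  - right. intros y Hy. apply Rnot_lt_le. intro Hfy.
    pose proof (cont_PD_std _ _ Hf) as Hc.
    destruct (Rlt_le_dec x y).
    + destruct (IVT f x y Hc r Hfx Hfy) as [z [Hz Hfz]]. apply (Hnz z); auto; lra.
    + destruct (Rle_lt_or_eq_dec _ _ r). 
      * destruct (IVT (fun t => - f t) y x) as [z [Hz Hfz]]; auto.
        apply continuity_opp; auto. lra. lra. apply (Hnz z). lra. lra.
      * subst. lra.
  - left. intros y Hy. apply Rnot_lt_le. intro. apply N. eauto.
Qed.

Definition sgn_ok (F : R -> R) := (forall x, -1 < x < 1 -> 0 <= F x) \/ (forall x, -1 < x < 1 -> F x <= 0).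

Lemma sign_decomp d : forall f, PD d f -> exists zo, NoDup zo /\ (forall z, In z zo -> -1 < z < 1 /\ f z = 0)
  /\ (length zo <= d)%nat /\ sgn_ok (fun x => f x * prodl zo x).
Proof.
  induction d; intros f Hf.
  - exists nil. split. constructor. split. simpl; tauto. split. simpl; lia.
    apply PD_0 in Hf. destruct Hf as [c Hc]. destruct (Rle_dec 0 c).
    left. intros; rewrite Hc; simpl; lra. right. intros; rewrite Hc; simpl; lra.
  - destruct (classic (exists z, -1 < z < 1 /\ f z = 0)) as [[z [Hz Hfz]]|N].
    + destruct (PD_factor _ _ _ Hf Hfz) as [h [Hh Hfh]]. simpl in Hh. rewrite Nat.sub_0_r in Hh.
      destruct (IHd h Hh) as [zo [Hnd [Hroots [Hlen Hsg]]]].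
      destruct (in_dec Req_EM_T z zo) as [Hin|Hnin].
      * exists (rm z zo). split. apply NoDup_rm; auto. split.
        intros y Hy. unfold rm in Hy. apply in_remove in Hy. destruct Hy as [Hy1 Hy2].
        destruct (Hroots y Hy1). split; auto. rewrite Hfh, H0; ring.
        split. pose proof (remove_length_lt Req_EM_T zo z Hin). unfold rm. lia.
        destruct Hsg as [Hs|Hs]; [left|right]; intros x Hx; specialize (Hs x Hx);
        rewrite (prodl_rm z zo Hnd Hin x) in Hs; rewrite Hfh; lra.
      * exists (z :: zo). split. constructor; auto. split.
        intros y [Hy|Hy]. subst. split; auto. destruct (Hroots y Hy). split; auto. rewrite Hfh, H0; ring.
        split. simpl; lia.
        assert (Hsq : forall x, 0 <= (x - z) * (x - z)) by (intro t; apply (Rle_0_sqr (t - z))).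
        destruct Hsg as [Hs|Hs]; [left|right]; intros x Hx; specialize (Hs x Hx); specialize (Hsq x);
        simpl; rewrite Hfh.
        replace ((x - z) * h x * ((x - z) * prodl zo x)) with (((x - z) * (x - z)) * (h x * prodl zo x)) by ring.
        nra.
        replace ((x - z) * h x * ((x - z) * prodl zo x)) with (((x - z) * (x - z)) * (h x * prodl zo x)) by ring.
        nra.
    + exists nil. split. constructor. split. simpl; tauto. split. simpl; lia.
      destruct (const_sign _ _ Hf) as [Hs|Hs].
      intros x Hx E. apply N; eauto.
      left; intros; simpl; rewrite Rmult_1_r; auto.
      right; intros; simpl; rewrite Rmult_1_r; auto.
Qed.

Lemma nonzero_somewhere d F : PD d F -> F 1 <> 0 -> exists y, -1 < y < 1 /\ F y <> 0.
Proof.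
  intros HF H1. apply NNPP. intro N.
  set (l := map (fun k => / INR (k + 2)) (seq 0 (S d))).
  assert (Hnd : NoDup l).
  { unfold l. apply FinFun.Injective_map_NoDup. intros k1 k2 E.
    assert (INR (k1 + 2) = INR (k2 + 2)).
    { rewrite <- (Rinv_inv (INR (k1+2))), <- (Rinv_inv (INR (k2+2))). rewrite E. auto. }
    apply INR_eq in H. lia. apply seq_NoDup. }
  assert (Hlen : length l = S d) by (unfold l; rewrite length_map, length_seq; auto).
  assert (forall x, F x = 0).
  { apply (roots_zero l d F HF Hnd). 2: lia.
    intros r Hr. unfold l in Hr. apply in_map_iff in Hr. destruct Hr as [k [Ek _]]. subst.
    apply NNPP. intro Hne. apply N. exists (/ INR (k + 2)). split; auto.
    assert (2 <= INR (k + 2)) by (rewrite plus_INR; simpl; pose proof (pos_INR k); lra).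
    split. assert (0 < / INR (k+2)) by (apply Rinv_0_lt_compat; lra). lra.
    apply Rmult_lt_reg_l with (INR (k+2)). lra. rewrite Rinv_r by lra. lra. }
  apply H1; auto.
Qed.


Lemma jacobiP_PD A B n : PD n (jacobiP A B n).
Proof.
  unfold jacobiP. apply (PD_sum n n (fun k x => gbinom (INR n + A) (n - k) * gbinom (INR n + B) k *
      ((x - 1) / 2) ^ k * ((x + 1) / 2) ^ (n - k))).
  intros k Hk. eapply PD_ext. 2: apply (PD_scal _ (gbinom (INR n + A) (n - k) * gbinom (INR n + B) k)).
  2: apply (PD_mono (k * 1 + (n - k) * 1)). 3: apply PD_mul. 3: apply (PD_pow 1 k (fun x => / 2 * x + - / 2)).
  4: apply (PD_pow 1 (n - k) (fun x => / 2 * x + / 2)).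
  intro x; cbv beta. replace ((x - 1) / 2) with (/ 2 * x + - / 2) by field.
  replace ((x + 1) / 2) with (/ 2 * x + / 2) by field. ring.
  lia. apply PD_lin. apply PD_lin.
Qed.

Lemma fallfac_pos z k : (forall j, (j < k)%nat -> 0 < z - INR j) -> 0 < fallfac z k.
Proof.
  induction k; intro H; simpl. lra. apply Rmult_lt_0_compat. apply IHk; intros; apply H; lia. apply H; lia.
Qed.

Lemma jacobiP_at1 A B n : -1 < A -> 0 < jacobiP A B n 1.
Proof.
  intro HA. unfold jacobiP.
  assert (Hg : 0 < gbinom (INR n + A) n).
  { unfold gbinom. apply Rdiv_lt_0_compat. apply fallfac_pos. intros j Hj.
    assert (INR j + 1 <= INR n) by (rewrite <- S_INR; apply le_INR; lia). lra.
    apply INR_fact_lt_0. }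
  destruct n.
  - simpl. simpl in Hg. unfold gbinom in *. simpl in *. lra.
  - rewrite decomp_sum by lia. rewrite sum_eq_R0.
    + replace (S n - 0)%nat with (S n) by lia.
      assert (E : gbinom (INR (S n) + B) 0 = 1) by (unfold gbinom; simpl; field).
      rewrite E. replace ((1 + 1) / 2) with 1 by field. rewrite pow1, pow_O. lra.
    + intros k Hk. replace ((1 - 1) / 2) with 0 by field. simpl. ring.
Qed.

Lemma sgn_scal k F : sgn_ok F -> sgn_ok (fun x => k * F x).
Proof.
  intros [H|H]; destruct (Rle_dec 0 k).
  - left; intros x Hx; specialize (H x Hx); nra.
  - right; intros x Hx; specialize (H x Hx); nra.
  - right; intros x Hx; specialize (H x Hx); nra.
  - left; intros x Hx; specialize (H x Hx); nra.
Qed.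

Lemma contI_w A B : contI (wJ A B). Proof. apply contI_wJ. Qed.

Theorem jac_zeros a b m c : -1 < a -> -1 < b -> (1 <= m)%nat -> c <> 0 ->
  exists zo k, NoDup zo /\ length zo = m /\ (forall z, In z zo -> -1 < z < 1) /\ k <> 0 /\
    forall x, jacobiP (a + 1) b m x * c = k * prodl zo x.
Proof.
  intros Ha Hb Hm Hc.
  set (P := jacobiP (a + 1) b m).
  assert (HP : PD m P) by apply jacobiP_PD.
  assert (HP1 : 0 < P 1) by (apply jacobiP_at1; lra).
  assert (Hp : PD m (fun x => P x * c)).
  { eapply PD_ext. 2: apply (PD_scal _ c _ HP). intro; cbv beta; ring. }
  destruct (sign_decomp m _ Hp) as [zo [Hnd [Hroots [Hlen Hsg]]]].
  assert (Hlen2 : length zo = m).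
  { destruct (Nat.eq_dec (length zo) m); auto. exfalso.
    assert (Hpz : PD (m - 1) (prodl zo)) by (apply PD_mono with (length zo); [lia|apply PD_prodl]).
    pose proof (ortho (a + 1) b m (prodl zo) ltac:(lra) Hb Hm Hpz) as HO. fold P in HO.
    set (F := fun x => P x * prodl zo x).
    assert (HF : PD (m + length zo) F) by (apply PD_mul; auto; apply PD_prodl).
    assert (HF1 : F 1 <> 0).
    { unfold F. apply Rmult_integral_contrapositive. split. lra. apply prodl_nz. intro Hin.
      destruct (Hroots 1 Hin) as [Hz _]. lra. }
    destruct (nonzero_somewhere _ _ HF HF1) as [y [Hy Fy]].
    assert (HsF : sgn_ok F).
    { eapply sgn_scal with (k := / c) in Hsg. destruct Hsg as [H|H]; [left|right]; intros x Hx; specialize (H x Hx);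
      unfold F; replace (P x * prodl zo x) with (/ c * (P x * c * prodl zo x)) by (field; auto); auto. }
    assert (Hc1 : contI (fun x => P x * prodl zo x * wJ (a + 1) b x)).
    { apply contI_mult. apply contI_mult. eapply contI_PD; eauto. eapply contI_PD. apply PD_prodl. apply contI_wJ. }
    destruct HsF as [H|H].
    - assert (0 < 0).
      { apply (HI_pos _ 0 HO Hc1). intros x Hx. specialize (H x Hx). pose proof (wJ_pos (a+1) b x). unfold F in H. nra.
        exists y. split; auto. specialize (H y Hy). pose proof (wJ_pos (a+1) b y). unfold F in *.
        assert (0 < P y * prodl zo y) by lra. nra. }
      lra.
    - assert (0 < 0).
      { replace 0 with (-1 * 0) at 2 by ring. apply (HI_pos _ _ (HI_scal (-1) _ _ HO)).
        apply contI_mult. apply contI_const. auto.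
        intros x Hx. specialize (H x Hx). pose proof (wJ_pos (a+1) b x). unfold F in H. nra.
        exists y. split; auto. specialize (H y Hy). pose proof (wJ_pos (a+1) b y). unfold F in *.
        assert (P y * prodl zo y < 0) by lra. nra. }
      lra. }
  destruct (factor_list zo m _ Hp Hnd) as [h [Hh Hph]].
  { intros z Hz. apply Hroots; auto. }
  rewrite Hlen2, Nat.sub_diag in Hh. apply PD_0 in Hh. destruct Hh as [k Hk].
  exists zo, k. split; auto. split; auto. split. intros z Hz; apply Hroots; auto.
  split.
  - intro Hk0. specialize (Hph 1). rewrite Hk, Hk0 in Hph. assert (P 1 * c = 0) by (rewrite Hph; ring).
    apply Rmult_integral in H. lra.
  - intro x. rewrite Hph, Hk. ring.
Qed.


Fixpoint lsum (l : list R) (g : R -> R) : R :=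
  match l with nil => 0 | y :: l' => g y + lsum l' g end.

Lemma lsum_ext l g1 g2 : (forall y, In y l -> g1 y = g2 y) -> lsum l g1 = lsum l g2.
Proof. induction l; simpl; intros; auto. rewrite H, IHl; auto. Qed.

Lemma lsum_delta l g y0 : NoDup l -> In y0 l -> (forall y, In y l -> y <> y0 -> g y = 0) -> lsum l g = g y0.
Proof.
  induction l; simpl; intros Hnd Hin H. contradiction. inversion Hnd; subst.
  destruct Hin as [->|Hin].
  - rewrite (lsum_ext l g (fun _ => 0)). clear. induction l; simpl; lra.
    intros y Hy. apply H. right; auto. intro; subst; contradiction.
  - rewrite H. rewrite IHl; auto. ring. left; auto. intro; subst; contradiction.
Qed.

Lemma PD_lsum d l (G : R -> R -> R) : (forall y, In y l -> PD d (G y)) -> PD d (fun x => lsum l (fun y => G y x)).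
Proof.
  induction l; simpl; intro H. apply PD_const. apply PD_add. apply H; auto. apply IHl; auto.
Qed.

Lemma HI_lsum l (G : R -> R -> R) (lam : R -> R) : (forall y, In y l -> HI (G y) (lam y)) ->
  HI (fun x => lsum l (fun y => G y x)) (lsum l lam).
Proof.
  induction l; simpl; intro H.
  - split. intros; apply (ex_RInt_ext (fun _ => 0)). intros; auto. apply ex_RInt_const.
    intros eps Heps. exists 1. split. lra. intros. rewrite RInt_const. unfold scal; simpl; unfold mult; simpl.
    rewrite Rmult_0_r, Rminus_0_r, Rabs_R0. auto.
  - apply (HI_plus (G a) (fun x => lsum l (fun y => G y x))). apply H; auto. apply IHl; auto.
Qed.

Lemma lsum_nonneg_zero l g : (forall y, In y l -> 0 <= g y) -> lsum l g <= 0 -> forall y, In y l -> g y = 0.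
Proof.
  induction l; simpl; intros H Hs y Hy. contradiction.
  assert (0 <= lsum l g).
  { clear -H. induction l; simpl. lra. assert (0 <= g a0) by (apply H; right; left; auto).
    assert (0 <= lsum l g). apply IHl. intros y [->|Hy]. apply H; left; auto. apply H; right; right; auto. lra. }
  assert (0 <= g a) by (apply H; left; auto).
  destruct Hy as [->|Hy]. lra. apply IHl; auto. lra.
Qed.

Lemma wJ_shift a b x : -1 < x < 1 -> wJ (a + 1) b x = (1 - x) * wJ a b x.
Proof. intro. unfold wJ. rewrite Rpower_plus, Rpower_1 by lra. ring. Qed.

Section Quad.
Variables (a b : R) (m : nat) (zo : list R).
Hypotheses (Ha : -1 < a) (Hb : -1 < b) (Hm : (1 <= m)%nat) (Hnd : NoDup zo) (Hlen : length zo = m)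
  (Hin : forall z, In z zo -> -1 < z < 1)
  (Horth : forall g, PD (m - 1) g -> HI (fun x => prodl zo x * g x * wJ (a + 1) b x) 0).

Let ns := 1 :: zo.
Definition ell y x := prodl (rm y ns) x / prodl (rm y ns) y.
Definition lam y := Iint (fun x => ell y x * wJ a b x).

Lemma ns_nd : NoDup ns.
Proof. constructor; auto. intro H. apply Hin in H. lra. Qed.

Lemma ell_PD y : In y ns -> PD m (ell y).
Proof.
  intro Hy. unfold ell. eapply PD_ext. 2: apply (PD_scal _ (/ prodl (rm y ns) y) (prodl (rm y ns))).
  intro; cbv beta; unfold Rdiv; ring.
  apply PD_mono with (length (rm y ns)). pose proof (remove_length_lt Req_EM_T ns y Hy).
  unfold rm, ns in *. simpl in *. lia. apply PD_prodl.
Qed.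

Lemma ell_self y : ell y y = 1.
Proof. unfold ell. field. apply prodl_nz. apply remove_In. Qed.

Lemma ell_other y y' : In y' ns -> y' <> y -> ell y y' = 0.
Proof. intros H1 H2. unfold ell. rewrite prodl_zero. unfold Rdiv; ring. apply in_in_remove; auto. Qed.

Lemma lam_HI y : In y ns -> HI (fun x => ell y x * wJ a b x) (lam y).
Proof.
  intro Hy. destruct (HI_poly_exists a b m (ell y) Ha Hb (ell_PD y Hy)) as [l Hl].
  unfold lam. rewrite (Iint_HI _ l Hl). auto.
Qed.

Lemma quad F : PD (2 * m) F -> HI (fun x => F x * wJ a b x) (lsum ns (fun y => F y * lam y)).
Proof.
  intro HF.
  set (L := fun x => lsum ns (fun y => F y * ell y x)).
  assert (HL : PD m L). { apply (PD_lsum m ns (fun y x => F y * ell y x)). intros. apply PD_scal. apply ell_PD; auto. }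
  assert (HLv : forall y0, In y0 ns -> L y0 = F y0).
  { intros y0 Hy0. unfold L. rewrite (lsum_delta ns _ y0 ns_nd Hy0). rewrite ell_self; ring.
    intros y Hy Hne. rewrite ell_other; auto. ring. }
  assert (HD : PD (2 * m) (fun x => F x - L x)) by (apply PD_sub; auto; apply PD_mono with m; auto; lia).
  destruct (factor_list ns _ _ HD ns_nd) as [g [Hg HFg]].
  { intros r Hr. rewrite HLv; auto; ring. }
  assert (Hg' : PD (m - 1) g) by (unfold ns in Hg; simpl in Hg; rewrite Hlen in Hg; eapply PD_mono; [|exact Hg]; lia).
  assert (H1 : HI (fun x => (F x - L x) * wJ a b x) 0).
  { replace 0 with (-1 * 0) by ring. apply HI_ext with (fun x => -1 * (prodl zo x * g x * wJ (a + 1) b x)).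
    intros x Hx. rewrite HFg, wJ_shift by auto. unfold ns; simpl. ring.
    apply HI_scal. apply Horth; auto. }
  assert (H2 : HI (fun x => L x * wJ a b x) (lsum ns (fun y => F y * lam y))).
  { apply HI_ext with (fun x => lsum ns (fun y => F y * (ell y x * wJ a b x))).
    intros x Hx. unfold L. clear. induction ns; simpl. ring. rewrite IHl. ring.
    apply (HI_lsum ns (fun y x => F y * (ell y x * wJ a b x))). intros y Hy. apply HI_scal. apply lam_HI; auto. }
  replace (lsum ns (fun y => F y * lam y)) with (lsum ns (fun y => F y * lam y) + 0) by ring.
  apply HI_ext with (fun x => L x * wJ a b x + (F x - L x) * wJ a b x). intros; ring.
  apply HI_plus; auto.
Qed.

Lemma lam_pos y : In y ns -> 0 < lam y.
Proof.
  intro Hy.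
  assert (HP : PD (2 * m) (fun x => ell y x * ell y x)).
  { replace (2 * m)%nat with (m + m)%nat by lia. apply PD_mul; apply ell_PD; auto. }
  pose proof (quad _ HP) as HQ.
  rewrite (lsum_delta ns _ y ns_nd Hy) in HQ. rewrite ell_self in HQ. rewrite !Rmult_1_l in HQ.
  2: { intros y' Hy' Hne. rewrite ell_other; auto. ring. }
  apply (HI_pos _ _ HQ).
  - apply contI_mult. apply contI_mult; eapply contI_PD; apply ell_PD; auto. apply contI_wJ.
  - intros x Hx. pose proof (wJ_pos a b x). pose proof (Rle_0_sqr (ell y x)). unfold Rsqr in *. nra.
  - assert (exists x0, -1 < x0 < 1 /\ ell y x0 <> 0).
    { destruct Hy as [<-|Hy].
      - apply (nonzero_somewhere m). apply ell_PD; left; auto. rewrite ell_self; lra.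
      - exists y. split. apply Hin; auto. rewrite ell_self; lra. }
    destruct H as [x0 [Hx0 Hne]]. exists x0. split; auto. pose proof (wJ_pos a b x0).
    assert (0 < ell y x0 * ell y x0) by (apply Rsqr_pos_lt in Hne; unfold Rsqr in Hne; auto). nra.
Qed.

Theorem quad_cons F l : PD (2 * m) F -> (forall y, In y ns -> 0 <= F y) ->
  HI (fun x => F x * wJ a b x) l -> l <= 0 -> forall y, In y ns -> F y = 0.
Proof.
  intros HF Hnn HI1 Hl y Hy.
  pose proof (quad F HF) as HQ.
  assert (E : l = lsum ns (fun y => F y * lam y)).
  { rewrite <- (Iint_HI _ _ HI1). apply Iint_HI; auto. }
  assert (Hz := lsum_nonneg_zero ns (fun y => F y * lam y)).
  assert (F y * lam y = 0).
  { apply Hz; auto. intros y' Hy'. pose proof (lam_pos y' Hy'). pose proof (Hnn y' Hy'). nra. lra. }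
  pose proof (lam_pos y Hy). apply Rmult_integral in H. destruct H; auto. lra.
Qed.

End Quad.


Lemma sign_change G z u : continuous G z -> G z <> 0 -> -1 < z < u ->
  exists y, -1 < y < u /\ (y - z) * G y < 0.
Proof.
  intros Hc Hnz Hz.
  destruct (cont_eps G z Hc (Rabs (G z) / 2)) as [del [Hdel K]].
  { apply Rdiv_lt_0_compat. apply Rabs_pos_lt; auto. lra. }
  destruct (Rlt_le_dec 0 (G z)) as [Hp|Hn].
  - set (t := Rmin del (z + 1) / 2).
    assert (0 < t) by (unfold t; apply Rdiv_lt_0_compat; [apply Rmin_pos; lra|lra]).
    assert (t < del) by (unfold t; pose proof (Rmin_l del (z+1)); lra).
    assert (t < z + 1) by (unfold t; pose proof (Rmin_r del (z+1)); lra).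
    exists (z - t). split. split; lra.
    specialize (K (z - t)). rewrite (Rabs_right (G z)) in K by lra.
    assert (Rabs (z - t - z) < del) by (rewrite Rabs_left; lra).
    specialize (K H2). apply Rabs_def2 in K. nra.
  - assert (Hn' : G z < 0) by (destruct Hn; auto; contradiction).
    set (t := Rmin del (u - z) / 2).
    assert (0 < t) by (unfold t; apply Rdiv_lt_0_compat; [apply Rmin_pos; lra|lra]).
    assert (t < del) by (unfold t; pose proof (Rmin_l del (u - z)); lra).
    assert (t < u - z) by (unfold t; pose proof (Rmin_r del (u - z)); lra).
    exists (z + t). split. split; lra.
    specialize (K (z + t)). rewrite (Rabs_left (G z)) in K by lra.
    assert (Rabs (z + t - z) < del) by (rewrite Rabs_right; lra).
    specialize (K H2). apply Rabs_def2 in K. nra.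
Qed.

Lemma vanish_sign zo f g u z : NoDup zo -> (forall x, f x = prodl (1 :: zo) x * g x) ->
  (forall x, continuous g x) -> In z zo -> -1 < z < u -> z < 1 ->
  (forall y, -1 <= y < u -> 0 <= f y) -> g z = 0.
Proof.
  intros Hnd Hf Hg Hin Hz Hz1 Hpos. apply NNPP. intro Hgz.
  set (G := fun x => (x - 1) * prodl (rm z zo) x * g x).
  assert (HG : forall x, f x = (x - z) * G x).
  { intro x. rewrite Hf. simpl. rewrite (prodl_rm z zo Hnd Hin x). unfold G. ring. }
  assert (Hc : continuous G z).
  { unfold G. apply (continuous_mult (fun x => (x - 1) * prodl (rm z zo) x) g).
    apply (continuous_mult (fun x => x - 1) (prodl (rm z zo))).
    apply (PD_continuous 1). eapply PD_ext. 2: apply (PD_lin 1 (-1)). intro; cbv beta; ring.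
    eapply PD_continuous. apply PD_prodl. apply Hg. }
  assert (HGz : G z <> 0).
  { unfold G. apply Rmult_integral_contrapositive. split. apply Rmult_integral_contrapositive. split. lra.
    apply prodl_nz. apply remove_In. auto. }
  destruct (sign_change G z u Hc HGz Hz) as [y [Hy Hneg]].
  specialize (Hpos y ltac:(lra)). rewrite HG in Hpos. lra.
Qed.

Lemma r_glb_exists f : exists m0, is_glb (r_set f) m0.
Proof.
  set (E := fun y => r_set f (- y)).
  assert (Hb : bound E). { exists 0. intros y [[H1 H2] _]. lra. }
  assert (He : exists y, E y). { exists (-2). unfold E, r_set. replace (- -2) with 2 by ring. split. lra. intros; lra. }
  destruct (completeness E Hb He) as [M [Hub Hlub]].
  exists (- M). split.
  - intros x Hx. assert (- x <= M). apply Hub. unfold E. rewrite Ropp_involutive; auto. lra.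
  - intros b' Hb'. assert (M <= - b'). apply Hlub. intros y Hy. unfold E in Hy. specialize (Hb' _ Hy). lra. lra.
Qed.

Lemma r_I_spec f : is_glb (r_set f) (r_I f).
Proof.
  unfold r_I. match goal with |- context [match ?t with left _ => _ | right _ => _ end] => destruct t as [E|E] end.
  - destruct (constructive_indefinite_description _ E) as [m0 Hm0]. simpl. auto.
  - exfalso. apply E. apply r_glb_exists.
Qed.

Lemma jacobiP0 a b x : jacobiP a b 0 x = 1.
Proof. unfold jacobiP, gbinom. simpl. field. Qed.


Lemma length_rm z l : NoDup l -> In z l -> S (length (rm z l)) = length l.
Proof.
  induction l; intros Hnd Hin; simpl in *. contradiction. inversion Hnd; subst. unfold rm; simpl.
  destruct (Req_EM_T z a).
  - subst. rewrite notin_remove; auto.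
  - destruct Hin. subst; contradiction. simpl. f_equal. apply IHl; auto.
Qed.

Lemma cont_nonneg_left (f : R -> R) x1 : (forall x, continuous f x) -> -1 < x1 ->
  (forall y, -1 <= y < x1 -> 0 <= f y) -> 0 <= f x1.
Proof.
  intros Hc Hx1 H. apply Rnot_lt_le. intro Hneg.
  destruct (cont_eps f x1 (Hc x1) (- f x1 / 2)) as [del [Hdel K]]. lra.
  set (t := Rmin del (x1 + 1) / 2).
  assert (0 < t) by (unfold t; apply Rdiv_lt_0_compat; [apply Rmin_pos; lra|lra]).
  assert (t < del) by (unfold t; pose proof (Rmin_l del (x1+1)); lra).
  assert (t <= (x1 + 1) / 2) by (unfold t; pose proof (Rmin_r del (x1+1)); lra).
  specialize (K (x1 - t)). assert (Rabs (x1 - t - x1) < del) by (rewrite Rabs_left; lra).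
  specialize (K H3). apply Rabs_def2 in K. specialize (H (x1 - t) ltac:(lra)). lra.
Qed.

Theorem mainTheorem9 (s a b : R) (m : nat) (x1 : R) (f : R -> R)
  (hs : s = 1 \/ s = -1)
  (hab : b <= a) (hb : -1/2 <= b)
  (hm : (1 <= m)%nat)
  (hx1_zero : jacobi_p (a + 1) b m x1 = 0)
  (hx1_max : forall y, jacobi_p (a + 1) b m y = 0 -> y <= x1)
  (hfB : in_B s a b f)
  (hf0 : exists x, inI x /\ f x <> 0)
  (hfpoly : is_poly_deg_le f (2 * m))
  (hf1 : s = 1 -> f 1 = 0) :
  1 - x1 <= r_I f /\
  (r_I f = 1 - x1 <->
     exists c, 0 < c /\
       forall x, x <> x1 ->
         f x = c * ((1 - x) * (jacobi_p (a + 1) b m x) ^ 2 / (x1 - x))).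
Proof.
  assert (Ha : -1 < a) by lra. assert (Hb : -1 < b) by lra.
  destruct hfB as [_ [Hj0 [_ Hs1]]].
  set (c := / sqrt (inner (a + 1) b (jacobiP (a + 1) b m) (jacobiP (a + 1) b m))).
  assert (Hp : forall x, jacobi_p (a+1) b m x = jacobiP (a+1) b m x * c) by (intro; unfold jacobi_p, c; unfold Rdiv; auto).
  assert (Hc : c <> 0).
  { intro Hc0. specialize (hx1_max (x1 + 1)). rewrite Hp, Hc0, Rmult_0_r in hx1_max. specialize (hx1_max eq_refl). lra. }
  destruct (jac_zeros a b m c Ha Hb hm Hc) as [zo [k [Hnd [Hlen [Hin [Hk Hpk]]]]]].
  assert (Hpp : forall x, jacobi_p (a+1) b m x = k * prodl zo x) by (intro; rewrite Hp; auto).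
  assert (Horth : forall g, PD (m - 1) g -> HI (fun x => prodl zo x * g x * wJ (a + 1) b x) 0).
  { intros g Hg. pose proof (ortho (a+1) b m g ltac:(lra) Hb hm Hg) as HO.
    replace 0 with (c / k * 0) by ring.
    apply HI_ext with (fun x => c / k * (jacobiP (a + 1) b m x * g x * wJ (a + 1) b x)).
    intros x Hx. replace (prodl zo x) with (jacobiP (a+1) b m x * c / k). field; auto.
    rewrite Hpk. field; auto.
    apply HI_scal; auto. }
  assert (Hx1in : In x1 zo).
  { apply NNPP. intro N. apply (prodl_nz zo x1 N). rewrite Hpp in hx1_zero.
    apply Rmult_integral in hx1_zero. destruct hx1_zero; [contradiction|auto]. }
  assert (Hzle : forall z, In z zo -> z <= x1).
  { intros z Hz. apply hx1_max. rewrite Hpp, prodl_zero; auto; ring. }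
  destruct (Hin x1 Hx1in) as [Hx1a Hx1b].
  destruct (HI_poly_exists a b (2*m) f Ha Hb hfpoly) as [I0 HI0].
  destruct (HI_poly_exists a b 0 (fun _ => 1) Ha Hb (PD_const 0 1)) as [C0 HC0'].
  assert (HC0 : HI (wJ a b) C0) by (eapply HI_ext; [|exact HC0']; intros; cbv beta; ring).
  assert (HC0pos : 0 < C0).
  { apply (HI_pos _ _ HC0). apply contI_wJ. intros; left; apply wJ_pos. exists 0. split. lra. apply wJ_pos. }
  assert (Hiint : Iint (wJ a b) = C0) by (apply Iint_HI; auto).
  assert (Hinner : inner a b (jacobiP a b 0) (jacobiP a b 0) = 1).
  { unfold inner, wprob. rewrite Hiint. apply Iint_HI. replace 1 with (/C0 * C0) by (field; lra).
    apply HI_ext with (fun x => / C0 * wJ a b x). intros x Hx. rewrite jacobiP0. unfold Rdiv. ring.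
    apply HI_scal; auto. }
  assert (Hjp0 : forall x, jacobi_p a b 0 x = 1).
  { intro x. unfold jacobi_p. rewrite Hinner, sqrt_1, jacobiP0. field. }
  assert (Hjc : jcoef a b f 0 = / C0 * I0).
  { unfold jcoef, inner, wprob. rewrite Hiint. apply Iint_HI.
    apply HI_ext with (fun x => / C0 * (f x * wJ a b x)).
    intros x Hx. rewrite Hjp0. unfold Rdiv. ring. apply HI_scal; auto. }
  assert (HI0neg : I0 <= 0).
  { rewrite Hjc in Hj0. pose proof (Rinv_0_lt_compat C0 HC0pos). nra. }
  assert (Hf1 : 0 <= f 1). { destruct hs as [Hs|Hs]. rewrite hf1; auto; lra. rewrite Hs in Hs1. lra. }
  assert (Hnodes : (forall y, -1 <= y < x1 -> 0 <= f y) -> 0 <= f x1 ->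
    exists g, PD (m - 1) g /\ forall x, f x = prodl (1 :: zo) x * g x).
  { intros Hpos Hx1pos.
    assert (Hv : forall y, In y (1 :: zo) -> f y = 0).
    { apply (quad_cons a b m zo Ha Hb hm Hnd Hlen Hin Horth f I0 hfpoly); auto.
      intros y [<-|Hy]. auto. destruct (Req_dec y x1). subst; auto.
      apply Hpos. pose proof (Hzle y Hy). destruct (Hin y Hy). lra. }
    destruct (factor_list (1 :: zo) (2 * m) f hfpoly) as [g [Hg Hfg]].
    { constructor; auto. intro H1. destruct (Hin 1 H1). lra. }
    auto.
    exists g. split; auto. simpl in Hg. rewrite Hlen in Hg. eapply PD_mono; [|exact Hg]. lia. }
  assert (C1 : forall r, r_set f r -> 1 - x1 <= r).
  { intros r [Hr Hrpos]. apply Rnot_lt_le. intro Hlt.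
    destruct Hnodes as [g [Hg Hfg]].
    { intros y Hy. apply Hrpos. lra. } { apply Hrpos. lra. }
    assert (Hgz : forall z, In z zo -> g z = 0).
    { intros z Hz. apply (vanish_sign zo f g (1 - r) z Hnd Hfg).
      intro; eapply PD_continuous; eauto. auto. pose proof (Hzle z Hz). destruct (Hin z Hz). split; lra.
      destruct (Hin z Hz); lra. intros y Hy. apply Hrpos. lra. }
    destruct hf0 as [x0 [_ Hx0]]. apply Hx0. rewrite Hfg.
    rewrite (roots_zero zo (m - 1) g Hg Hnd Hgz ltac:(lia) x0). ring. }
  pose proof (r_I_spec f) as [Hlb Hgl].
  split.
  { apply Hgl. exact C1. }
  split.
  - intro Heq.
    assert (Hpos : forall y, -1 <= y < x1 -> 0 <= f y).
    { intros y Hy. apply NNPP. intro N.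
      assert (1 - y <= r_I f).
      { apply Hgl. intros r Hr. apply Rnot_lt_le. intro Hlt. apply N. destruct Hr as [_ Hr]. apply Hr. lra. }
      lra. }
    assert (Hfx1 : 0 <= f x1).
    { apply cont_nonneg_left; auto. intro; eapply PD_continuous; eauto. }
    destruct (Hnodes Hpos Hfx1) as [g [Hg Hfg]].
    set (zo' := rm x1 zo).
    assert (Hlen' : length zo' = (m - 1)%nat) by (pose proof (length_rm x1 zo Hnd Hx1in); unfold zo'; lia).
    destruct (factor_list zo' (m - 1) g Hg (NoDup_rm x1 zo Hnd)) as [h [Hh Hgh]].
    { intros z Hz. unfold zo', rm in Hz. apply in_remove in Hz. destruct Hz as [Hz Hne].
      apply (vanish_sign zo f g x1 z Hnd Hfg).
      intro; eapply PD_continuous; eauto. auto. pose proof (Hzle z Hz). destruct (Hin z Hz). split; lra.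
      destruct (Hin z Hz); lra. auto. }
    rewrite Hlen', Nat.sub_diag in Hh. apply PD_0 in Hh. destruct Hh as [k' Hk'].
    assert (Hform : forall x, f x = k' * ((x - 1) * prodl zo x * prodl zo' x)).
    { intro x. rewrite Hfg, Hgh, Hk'. simpl. ring. }
    assert (Hk'0 : k' <> 0).
    { intro E. destruct hf0 as [x0 [_ Hx0]]. apply Hx0. rewrite Hform, E. ring. }
    assert (HT : forall x, x <> x1 -> (1 - x) * (jacobi_p (a + 1) b m x) ^ 2 / (x1 - x)
        = k ^ 2 * ((x - 1) * prodl zo x * prodl zo' x)).
    { intros x Hx. rewrite Hpp. rewrite (prodl_rm x1 zo Hnd Hx1in x). fold zo'. field. lra. }
    exists (k' / k ^ 2). split.
    + assert (Hm1 : -1 <> x1) by lra.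
      assert (HT1 : 0 < (1 - -1) * (jacobi_p (a + 1) b m (-1)) ^ 2 / (x1 - -1)).
      { assert (jacobi_p (a + 1) b m (-1) <> 0).
        { rewrite Hpp. apply Rmult_integral_contrapositive. split; auto. apply prodl_nz. intro H1.
          destruct (Hin _ H1). lra. }
        apply Rdiv_lt_0_compat. apply Rmult_lt_0_compat. lra. apply pow2_gt_0; auto. lra. }
      assert (Hf_1 : 0 <= f (-1)) by (apply Hpos; lra).
      rewrite Hform in Hf_1. rewrite (HT (-1) Hm1) in HT1.
      assert (0 < k ^ 2) by (apply pow2_gt_0; auto).
      assert (0 < (-1 - 1) * prodl zo (-1) * prodl zo' (-1)).
      { apply Rmult_lt_reg_l with (k ^ 2). auto. lra. }
      assert (0 < k') by (destruct (Rtotal_order k' 0) as [H3|[H3|H3]]; [nra|contradiction|auto]).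
      apply Rdiv_lt_0_compat; auto.
    + intros x Hx. rewrite HT by auto. rewrite Hform. field. auto.
  - intros [c' [Hc'p Hfc]].
    assert (Hmem : r_set f (1 - x1)).
    { split. split; lra. intros y Hy. replace (1 - (1 - x1)) with x1 in Hy by ring.
      rewrite Hfc by lra. apply Rmult_le_pos. lra.
      apply Rmult_le_pos. apply Rmult_le_pos. lra. apply pow2_ge_0. left; apply Rinv_0_lt_compat; lra. }
    apply Rle_antisym. apply Hlb; auto. apply Hgl. exact C1.
Qed.
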